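(* For $0<\varepsilon\le1$ and $z\in\mathbf{C}\setminus\mathbf{R}$ let $S_\varepsilon(z)=\sum_{n\in\mathbf{Z}}\frac{1}{(z+n)^2|z+n|^{2\varepsilon}}$. Fix $y_0>0$. Then there is a constant $C>0$ depending only on $y_0$ such that for all $z$ with $y=\mathrm{Im}(z)$ satisfying $|y|\ge y_0$ and all $0<\varepsilon\le1$, \[|S_\varepsilon(z)|\le C\left(\frac{1}{\Gamma(\varepsilon)|y|^{1+2\varepsilon}}+e^{-2\pi|y|}\right),\] where $\Gamma(s)=\int_0^\infty e^{-t}t^{s-1}dt$. *)

(* Defs.v *)
From Stdlib Require Import Reals.
From Coquelicot Require Import Coquelicot.
Open Scope R_scope.

Definition Gamma (s : R) : R :=
  RInt_gen (fun t => exp (- t) * Rpower t (s - 1)) (at_right 0) (Rbar_locally p_infty).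

Definition Sterm (eps : R) (w : C) : C :=
  Cinv (Cmult (Cmult w w) (RtoC (Rpower (Cmod w) (2 * eps)))).

(* S_eps(z) = sum_{n in Z} Sterm eps (z + n), written as the (absolutely convergent)
   series over n >= 0 of the paired terms for n and -(n+1). *)
Definition S (eps : R) (z : C) : C :=
  @iota C_CompleteNormedModule (fun l : C => @is_series C_AbsRing C_NormedModule (fun n : nat =>
          Cplus (Sterm eps (Cplus z (RtoC (INR n))))
                (Sterm eps (Cminus z (RtoC (INR n + 1))))) l).

(* Main.v *)
Require Import Defs.
From Stdlib Require Import Reals Lra Lia ZArith Classical.
From Coquelicot Require Import Coquelicot.
Open Scope R_scope.

Lemma exp_mono x y : x <= y -> exp x <= exp y.
Proof. intros [H|H]; [left; apply exp_increasing; auto | subst; lra]. Qed.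

Lemma ln_mono x y : 0 < x -> x <= y -> ln x <= ln y.
Proof. intros Hx [H|H]; [left; apply ln_increasing; auto | subst; lra]. Qed.

Lemma ln_le_xm1 x : 0 < x -> ln x <= x - 1.
Proof. intros Hx. generalize (exp_ineq1_le (ln x)). rewrite exp_ln; lra. Qed.

Lemma rp_pos x a : 0 < Rpower x a.
Proof. unfold Rpower; apply exp_pos. Qed.

Lemma rp_base_neg a b c : 0 < a -> a <= b -> c <= 0 -> Rpower b c <= Rpower a c.
Proof.
  intros Ha Hab Hc. unfold Rpower. apply exp_mono.
  assert (ln a <= ln b) by (apply ln_mono; lra). nra.
Qed.

Lemma rp_base_pos a b c : 0 < a -> a <= b -> 0 <= c -> Rpower a c <= Rpower b c.
Proof.
  intros Ha Hab Hc. unfold Rpower. apply exp_mono.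
  assert (ln a <= ln b) by (apply ln_mono; lra). nra.
Qed.

Lemma rp_exp_ge1 x a b : 1 <= x -> a <= b -> Rpower x a <= Rpower x b.
Proof.
  intros Hx Hab. unfold Rpower. apply exp_mono.
  assert (0 <= ln x) by (rewrite <- ln_1; apply ln_mono; lra). nra.
Qed.

Lemma rp_plus x a b : Rpower x (a + b) = Rpower x a * Rpower x b.
Proof. apply Rpower_plus. Qed.

Lemma rp_opp x a : Rpower x (- a) = / Rpower x a.
Proof. apply Rpower_Ropp. Qed.

Lemma rp_1 x : 0 < x -> Rpower x 1 = x.
Proof. apply Rpower_1. Qed.

Lemma rp_0 x : Rpower x 0 = 1.
Proof. unfold Rpower. rewrite Rmult_0_l. apply exp_0. Qed.

Lemma rp_mult_base x y a : 0 < x -> 0 < y -> Rpower (x * y) a = Rpower x a * Rpower y a.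
Proof. intros. unfold Rpower. rewrite ln_mult by auto. rewrite <- exp_plus. f_equal. ring. Qed.

Lemma rp_inv_base x a : 0 < x -> Rpower (/ x) a = Rpower x (- a).
Proof. intros. unfold Rpower. rewrite ln_Rinv by auto. f_equal; ring. Qed.

Lemma tele (al u : R) : 1 < al -> 1 < u ->
  (al - 1) * Rpower u (- al) <= Rpower (u - 1) (1 - al) - Rpower u (1 - al).
Proof.
  intros Hal Hu. unfold Rpower.
  set (L := ln u). set (L' := ln (u - 1)).
  assert (HLL : L - L' >= / u).
  { unfold L, L'.
    assert (E : u - 1 = u * ((u - 1) / u)) by (field; lra).
    rewrite E, ln_mult; [| lra | apply Rdiv_lt_0_compat; lra].
    assert (H := ln_le_xm1 ((u - 1) / u)).
    assert (0 < (u - 1) / u) by (apply Rdiv_lt_0_compat; lra).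
    assert ((u - 1) / u - 1 = - / u) by (field; lra). lra. }
  assert (E1 : (1 - al) * L' = (1 - al) * L + (al - 1) * (L - L')) by ring.
  rewrite E1, exp_plus.
  assert (H2 := exp_ineq1_le ((al - 1) * (L - L'))).
  assert (E2 : - al * L = (1 - al) * L + - L) by ring.
  rewrite E2, exp_plus.
  assert (E3 : exp (- L) = / u) by (unfold L; rewrite exp_Ropp, exp_ln; lra).
  rewrite E3.
  assert (0 < exp ((1 - al) * L)) by apply exp_pos.
  assert (0 < / u) by (apply Rinv_0_lt_compat; lra).
  assert ((al - 1) * (L - L') >= (al - 1) * / u) by nra.
  nra.
Qed.

Lemma le_div_r a b c : 0 < c -> c * a <= b -> a <= b / c.
Proof. intros. apply Rmult_le_reg_l with c; auto. replace (c * (b / c)) with b by (field; lra). auto. Qed.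

Lemma div_le_l a b c : 0 < c -> a <= c * b -> a / c <= b.
Proof. intros. apply Rmult_le_reg_l with c; auto. replace (c * (a / c)) with a by (field; lra). auto. Qed.

Fixpoint rs (b : nat -> R) (N : nat) : R :=
  match N with O => 0 | Datatypes.S k => rs b k + b k end.

Lemma rs_le (a b : nat -> R) N : (forall n, (n < N)%nat -> a n <= b n) -> rs a N <= rs b N.
Proof.
  induction N; simpl; intros H; [lra|].
  assert (rs a N <= rs b N) by (apply IHN; intros; apply H; lia).
  assert (a N <= b N) by (apply H; lia). lra.
Qed.

Lemma rs_scal c (b : nat -> R) N : rs (fun n => c * b n) N = c * rs b N.
Proof. induction N; simpl; [ring | rewrite IHN; ring]. Qed.

Lemma rs_plus (a b : nat -> R) N : rs (fun n => a n + b n) N = rs a N + rs b N.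
Proof. induction N; simpl; [ring | rewrite IHN; ring]. Qed.

Lemma rs_nonneg (b : nat -> R) N : (forall n, 0 <= b n) -> 0 <= rs b N.
Proof. intros H; induction N; simpl; [lra | specialize (H N); lra]. Qed.

Lemma rs_mono (b : nat -> R) N M : (forall n, 0 <= b n) -> (N <= M)%nat -> rs b N <= rs b M.
Proof.
  intros H HNM. induction HNM; [lra| simpl; specialize (H m); lra].
Qed.

Lemma sum_shift_bound (al Y : R) : 1 < al -> 0 < Y -> forall N, (1 <= N)%nat ->
  rs (fun n => Rpower (INR n + Y) (- al)) N <=
  Rpower Y (- al) + (Rpower Y (1 - al) - Rpower (INR N - 1 + Y) (1 - al)) / (al - 1).
Proof.
  intros Hal HY N HN. induction HN.
  - simpl. replace (0 + Y) with Y by ring. replace (1 - 1 + Y) with Y by ring.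
    unfold Rdiv. rewrite Rminus_diag, Rmult_0_l. lra.
  - simpl rs. rewrite S_INR.
    assert (H1 : 1 <= INR m) by (apply (le_INR 1); lia).
    assert (Ht := tele al (INR m + Y) Hal ltac:(lra)).
    replace (INR m + Y - 1) with (INR m - 1 + Y) in Ht by ring.
    replace (INR m + 1 - 1 + Y) with (INR m + Y) by ring.
    assert (Hd : Rpower (INR m + Y) (- al) <=
       (Rpower (INR m - 1 + Y) (1 - al) - Rpower (INR m + Y) (1 - al)) / (al - 1)).
    { apply le_div_r; lra. }
    assert (E : (Rpower Y (1 - al) - Rpower (INR m - 1 + Y) (1 - al)) / (al - 1)
      + (Rpower (INR m - 1 + Y) (1 - al) - Rpower (INR m + Y) (1 - al)) / (al - 1)
      = (Rpower Y (1 - al) - Rpower (INR m + Y) (1 - al)) / (al - 1)) by (field; lra).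
    lra.
Qed.

Lemma SB (y0 : R) (hy0 : 0 < y0) (al Y : R) : 2 <= al <= 4 -> y0 <= Y -> forall N,
  rs (fun n => Rpower (sqrt (INR n ^ 2 + Y ^ 2)) (- al)) N <= 16 * (1 + / y0) * Rpower Y (1 - al).
Proof.
  intros Hal HY N.
  assert (HY0 : 0 < Y) by lra.
  assert (Hterm : forall n, Rpower (sqrt (INR n ^ 2 + Y ^ 2)) (- al) <= 16 * Rpower (INR n + Y) (- al)).
  { intros n. assert (Hn := pos_INR n).
    assert (Hs : (INR n + Y) / 2 <= sqrt (INR n ^ 2 + Y ^ 2)).
    { apply Rsqr_incr_0_var; [| apply sqrt_pos]. rewrite Rsqr_sqrt by nra. unfold Rsqr. nra. }
    eapply Rle_trans; [apply rp_base_neg; [| exact Hs | lra] ; lra|].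
    unfold Rdiv. rewrite rp_mult_base by (try apply Rinv_0_lt_compat; lra).
    rewrite rp_inv_base by lra. rewrite Ropp_involutive.
    assert (Rpower 2 al <= Rpower 2 4).
    { apply rp_exp_ge1; lra. }
    assert (Rpower 2 4 = 16).
    { replace 4 with (INR 4) by (simpl; ring). rewrite Rpower_pow by lra. simpl; ring. }
    assert (0 < Rpower (INR n + Y) (- al)) by apply rp_pos. nra. }
  destruct N as [|N].
  - simpl. assert (0 < Rpower Y (1 - al)) by apply rp_pos.
    assert (0 < / y0) by (apply Rinv_0_lt_compat; lra). nra.
  - eapply Rle_trans. { apply rs_le. intros n _. apply Hterm. }
    rewrite rs_scal.
    assert (Hs := sum_shift_bound al Y ltac:(lra) HY0 (Datatypes.S N) ltac:(lia)).
    assert (0 < Rpower (INR (Datatypes.S N) - 1 + Y) (1 - al)) by apply rp_pos.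
    assert (Hd : (Rpower Y (1 - al) - Rpower (INR (Datatypes.S N) - 1 + Y) (1 - al)) / (al - 1) <= Rpower Y (1 - al)).
    { apply div_le_l; [lra|].
      assert (0 < Rpower Y (1 - al)) by apply rp_pos. nra. }
    assert (Hy : Rpower Y (- al) <= / y0 * Rpower Y (1 - al)).
    { replace (1 - al) with (1 + - al) by ring. rewrite rp_plus, rp_1 by lra.
      assert (0 < Rpower Y (- al)) by apply rp_pos.
      assert (/ y0 * Y >= 1).
      { apply Rle_ge. apply (Rmult_le_reg_l y0); [lra|]. rewrite <- Rmult_assoc, Rinv_r by lra. lra. }
      nra. }
    nra.
Qed.

Definition P (e : R) (z : C) (n : nat) : C :=
  Cplus (Sterm e (Cplus z (RtoC (INR n)))) (Sterm e (Cminus z (RtoC (INR n + 1)))).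

Lemma S_eq e z l : @is_series C_AbsRing C_NormedModule (P e z) l -> S e z = l.
Proof.
  intros H. unfold S.
  apply (@iota_unique C_AbsRing C_CompleteNormedModule).
  - intros y Hy. eapply (@filterlim_locally_unique nat C_AbsRing C_NormedModule); [ | exact Hy | exact H].
    apply Proper_StrongProper, eventually_filter.
  - exact H.
Qed.

Fixpoint cs (a : nat -> C) (N : nat) : C :=
  match N with O => RtoC 0 | Datatypes.S k => Cplus (cs a k) (a k) end.

Lemma sum_n_cs (a : nat -> C) N : @sum_n C_AbelianMonoid a N = cs a (Datatypes.S N).
Proof.
  induction N.
  - rewrite sum_O. simpl. now rewrite Cplus_0_l.
  - rewrite sum_Sn, IHN. reflexivity.
Qed.

Lemma sum_n_rs (a : nat -> R) N : sum_n a N = rs a (Datatypes.S N).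
Proof.
  induction N.
  - rewrite sum_O. simpl. ring.
  - rewrite sum_Sn, IHN. reflexivity.
Qed.

Definition climit (u : nat -> C) (l : C) := filterlim (u : nat -> C_NormedModule) eventually (locally (l : C_NormedModule)).

Lemma climit_S (u : nat -> C) l : climit u l -> climit (fun n => u (Datatypes.S n)) l.
Proof.
  intros H. unfold climit in *. eapply filterlim_comp; [|exact H].
  intros P [N HN]. exists N. intros n Hn. apply HN. lia.
Qed.

Lemma cs_series a l : climit (cs a) l -> @is_series C_AbsRing C_NormedModule a l.
Proof.
  intros H. unfold is_series.
  eapply filterlim_ext; [intros n; symmetry; apply sum_n_cs|].
  apply (climit_S (cs a)). exact H.
Qed.

Lemma series_cs a l : @is_series C_AbsRing C_NormedModule a l -> climit (cs a) l.
Proof.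
  intros H. unfold is_series in H. unfold climit.
  apply filterlim_locally. intros eps.
  assert (H' := proj1 (filterlim_locally _ _) H eps).
  destruct H' as [N HN]. exists (Datatypes.S N). intros n Hn.
  destruct n as [|n]; [lia|]. rewrite <- sum_n_cs. apply HN. lia.
Qed.

Lemma climit_bound (u : nat -> C) l (b : nat -> R) :
  (forall n, Cmod (Cminus (u n) l) <= b n) -> is_lim_seq b 0 -> climit u l.
Proof.
  intros Hb Hl. unfold climit. apply filterlim_locally. intros eps.
  assert (H := proj1 (filterlim_locally _ _) Hl eps). destruct H as [N HN].
  exists N. intros n Hn. apply norm_compat1.
  specialize (HN n Hn). specialize (Hb n).
  change (Cmod (Cminus (u n) l) < eps).
  unfold ball in HN. simpl in HN. unfold AbsRing_ball, abs, minus, plus, opp in HN. simpl in HN.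
  rewrite Ropp_0, Rplus_0_r in HN. apply Rabs_def2 in HN. lra.
Qed.

Lemma climit_norm_le (u : nat -> C) l B : climit u l -> (forall n, Cmod (u n) <= B) -> Cmod l <= B.
Proof.
  intros H Hb.
  assert (Hn : is_lim_seq (fun n => Cmod (u n)) (Cmod l)).
  { unfold is_lim_seq. eapply filterlim_comp; [exact H|].
    apply (@filterlim_norm C_AbsRing C_NormedModule). }
  assert (Hc : is_lim_seq (fun _ => B) B) by apply is_lim_seq_const.
  assert (Rbar_le (Cmod l) B).
  { eapply is_lim_seq_le; [| exact Hn | exact Hc]. intros n; apply Hb. }
  simpl in H0. exact H0.
Qed.

Lemma climit_plus u v l1 l2 : climit u l1 -> climit v l2 -> climit (fun n => Cplus (u n) (v n)) (Cplus l1 l2).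
Proof.
  intros H1 H2. unfold climit.
  eapply (filterlim_comp_2 (F := eventually) u v (fun x y : C_NormedModule => plus x y)); [exact H1 | exact H2 |].
  apply (@filterlim_plus C_AbsRing C_NormedModule).
Qed.

Lemma Cmod_pair a b : Cmod (a, b) = sqrt (a ^ 2 + b ^ 2).
Proof. reflexivity. Qed.

Lemma Cmod_re_le (z : C) : Rabs (Re z) <= Cmod z.
Proof.
  destruct z as [a b]. rewrite Cmod_pair. simpl.
  rewrite <- sqrt_Rsqr_abs. apply sqrt_le_1_alt. unfold Rsqr. nra.
Qed.

Lemma Cmod_im_le (z : C) : Rabs (Im z) <= Cmod z.
Proof.
  destruct z as [a b]. rewrite Cmod_pair. simpl.
  rewrite <- sqrt_Rsqr_abs. apply sqrt_le_1_alt. unfold Rsqr. nra.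
Qed.

Lemma ne0_of_im (w : C) : Im w <> 0 -> w <> RtoC 0.
Proof. intros H E. apply H. rewrite E. reflexivity. Qed.

Lemma Cmod_pos_of_im (w : C) : Im w <> 0 -> 0 < Cmod w.
Proof. intros H. assert (Habs := Rabs_pos_lt _ H). assert (Hh := Cmod_im_le w). lra. Qed.

Lemma Sterm_norm e w : w <> RtoC 0 -> Cmod (Sterm e w) = Rpower (Cmod w) (- (2 + 2 * e)).
Proof.
  intros Hw. assert (Hp : 0 < Cmod w) by (apply Cmod_gt_0; auto).
  assert (Hr : 0 < Rpower (Cmod w) (2 * e)) by apply rp_pos.
  unfold Sterm. rewrite Cmod_inv.
  - rewrite !Cmod_mult, Cmod_R, Rabs_pos_eq by lra.
    rewrite rp_opp, rp_plus.
    assert (E2 : Rpower (Cmod w) 2 = Cmod w * Cmod w).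
    { replace 2 with (INR 2) by (simpl; ring). rewrite Rpower_pow by auto. simpl. ring. }
    rewrite E2. reflexivity.
  - intros E. assert (Cmod (w * w * RtoC (Rpower (Cmod w) (2 * e))) = 0) by (rewrite E; apply Cmod_0).
    rewrite !Cmod_mult, Cmod_R, Rabs_pos_eq in H by lra.
    assert (0 < Cmod w * Cmod w * Rpower (Cmod w) (2 * e)) by (repeat apply Rmult_lt_0_compat; auto). lra.
Qed.

Lemma Sterm_bound e w rho : 0 < rho -> rho <= Cmod w -> 0 <= 2 + 2 * e ->
  Cmod (Sterm e w) <= Rpower rho (- (2 + 2 * e)).
Proof.
  intros Hr Hw He. rewrite Sterm_norm.
  - apply rp_base_neg; lra.
  - intros E. rewrite E, Cmod_0 in Hw. lra.
Qed.

Lemma Sterm_alt e w : w <> RtoC 0 -> Sterm e w = Cdiv (RtoC (Rpower (Cmod w) (- (2 * e)))) (Cmult w w).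
Proof.
  intros Hw. unfold Sterm. rewrite rp_opp.
  assert (Hr : 0 < Rpower (Cmod w) (2 * e)) by apply rp_pos.
  rewrite RtoC_inv by lra.
  assert (RtoC (Rpower (Cmod w) (2 * e)) <> RtoC 0).
  { intros E. injection E. lra. }
  field. auto.
Qed.

Lemma Cmod_cs_le (a : nat -> C) N : Cmod (cs a N) <= rs (fun n => Cmod (a n)) N.
Proof.
  induction N; simpl.
  - rewrite Cmod_0. lra.
  - eapply Rle_trans; [apply Cmod_triangle|]. lra.
Qed.

Lemma P_bound01 e z n : 0 <= e -> 0 <= Re z < 1 -> Im z <> 0 ->
  Cmod (P e z n) <= 2 * Rpower (sqrt (INR n ^ 2 + Rabs (Im z) ^ 2)) (- (2 + 2 * e)).
Proof.
  intros He Hx Hy. destruct z as [x y]. simpl in Hx, Hy.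
  assert (Hn := pos_INR n).
  assert (Hs : 0 < sqrt (INR n ^ 2 + Rabs y ^ 2)).
  { apply sqrt_lt_R0. assert (0 < Rabs y) by (apply Rabs_pos_lt; auto). nra. }
  unfold P. eapply Rle_trans; [apply Cmod_triangle|].
  assert (E2 : Rabs y ^ 2 = y ^ 2) by (unfold Rabs; destruct Rcase_abs; ring).
  assert (H1 : Cmod (Sterm e (Cplus (x, y) (RtoC (INR n)))) <= Rpower (sqrt (INR n ^ 2 + Rabs y ^ 2)) (- (2 + 2 * e))).
  { apply Sterm_bound; auto; [|lra]. unfold Cplus, RtoC; cbn [fst snd]. rewrite Cmod_pair.
    apply sqrt_le_1_alt. rewrite E2. nra. }
  assert (H2 : Cmod (Sterm e (Cminus (x, y) (RtoC (INR n + 1)))) <= Rpower (sqrt (INR n ^ 2 + Rabs y ^ 2)) (- (2 + 2 * e))).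
  { apply Sterm_bound; auto; [|lra]. unfold Cminus, Cplus, Copp, RtoC; cbn [fst snd]. rewrite Cmod_pair.
    apply sqrt_le_1_alt. rewrite E2. nra. }
  change (Im (x, y)) with y. lra.
Qed.

Lemma ex_series_pos_bounded (b : nat -> R) M : (forall n, 0 <= b n) -> (forall N, rs b N <= M) -> ex_series b.
Proof.
  intros Hp Hb.
  assert (H : ex_finite_lim_seq (sum_n b)).
  { apply ex_finite_lim_seq_incr with M.
    - intros n. rewrite !sum_n_rs. simpl. specialize (Hp (Datatypes.S n)). simpl in Hp. lra.
    - intros n. rewrite sum_n_rs. apply Hb. }
  destruct H as [l Hl]. exists l. exact Hl.
Qed.

Lemma conv01 y0 (hy0 : 0 < y0) e z : 0 <= e <= 1 -> 0 <= Re z < 1 -> y0 <= Rabs (Im z) ->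
  exists l, @is_series C_AbsRing C_NormedModule (P e z) l /\
    Cmod l <= 32 * (1 + / y0) * Rpower (Rabs (Im z)) (- 1 - 2 * e).
Proof.
  intros He Hx HY.
  assert (Hy : Im z <> 0).
  { intros E. rewrite E, Rabs_R0 in HY. lra. }
  set (Y := Rabs (Im z)) in *.
  set (b := fun n => 2 * Rpower (sqrt (INR n ^ 2 + Y ^ 2)) (- (2 + 2 * e))).
  assert (Hb : forall N, rs b N <= 32 * (1 + / y0) * Rpower Y (- 1 - 2 * e)).
  { intros N. unfold b. rewrite rs_scal.
    assert (H := SB y0 hy0 (2 + 2 * e) Y ltac:(lra) HY N).
    replace (1 - (2 + 2 * e)) with (- 1 - 2 * e) in H by ring. lra. }
  assert (Hex : ex_series b).
  { apply ex_series_pos_bounded with (32 * (1 + / y0) * Rpower Y (- 1 - 2 * e)); auto.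
    intros n. unfold b. assert (H := rp_pos (sqrt (INR n ^ 2 + Y ^ 2)) (- (2 + 2 * e))). lra. }
  assert (HexP : @ex_series C_AbsRing C_CompleteNormedModule (P e z)).
  { apply (ex_series_le (K := C_AbsRing) (V := C_CompleteNormedModule) _ b); auto.
    intros n. change (Cmod (P e z n) <= b n). apply P_bound01; auto; lra. }
  destruct HexP as [l Hl]. exists l. split; [exact Hl|].
  apply (climit_norm_le (cs (P e z))); [apply series_cs; exact Hl|].
  intros N. eapply Rle_trans; [apply Cmod_cs_le|]. eapply Rle_trans; [|apply (Hb N)].
  apply rs_le. intros n _. apply P_bound01; auto; lra.
Qed.

Lemma climit_bound_ev (u : nat -> C) l (b : nat -> R) :
  eventually (fun n => Cmod (Cminus (u n) l) <= b n) -> is_lim_seq b 0 -> climit u l.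
Proof.
  intros [N0 Hb] Hl. unfold climit. apply filterlim_locally. intros eps.
  assert (H := proj1 (filterlim_locally _ _) Hl eps). destruct H as [N HN].
  exists (max N N0). intros n Hn. apply norm_compat1.
  specialize (HN n ltac:(lia)). specialize (Hb n ltac:(lia)).
  change (Cmod (Cminus (u n) l) < eps).
  unfold ball in HN. simpl in HN. unfold AbsRing_ball, abs, minus, plus, opp in HN. simpl in HN.
  rewrite Ropp_0, Rplus_0_r in HN. apply Rabs_def2 in HN. lra.
Qed.

Lemma climit_ext u v l : (forall n, u n = v n) -> climit u l -> climit v l.
Proof. intros H Hu. unfold climit in *. eapply filterlim_ext; [exact H | exact Hu]. Qed.

Lemma climit_opp u l : climit u l -> climit (fun n => Copp (u n)) (Copp l).
Proof.
  intros H. unfold climit in *. eapply filterlim_comp; [exact H|].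
  apply (@filterlim_opp C_AbsRing C_NormedModule).
Qed.

Lemma climit_minus u v l1 l2 : climit u l1 -> climit v l2 -> climit (fun n => Cminus (u n) (v n)) (Cminus l1 l2).
Proof. intros H1 H2. apply climit_plus; auto. apply climit_opp; auto. Qed.

Lemma eventually_INR_gt M : eventually (fun n => M < INR n).
Proof.
  assert (H := is_lim_seq_INR). unfold is_lim_seq, filterlim, filter_le, filtermap in H.
  apply (H (fun x => M < x)). exists M. intros x Hx. exact Hx.
Qed.

Lemma Sterm_tail e z (sg : R) : 0 <= e -> (sg = 1 \/ sg = -1) ->
  climit (fun N => Sterm e (Cplus z (RtoC (sg * INR N)))) (RtoC 0).
Proof.
  intros He Hsg.
  set (A := Rabs (Re z) + 1).
  apply climit_bound_ev with (b := fun n => / (INR n - A)).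
  - destruct (eventually_INR_gt (A + 1)) as [N0 HN0]. exists N0. intros n Hn.
    specialize (HN0 n Hn).
    replace (Cminus (Sterm e (Cplus z (RtoC (sg * INR n)))) (RtoC 0)) with (Sterm e (Cplus z (RtoC (sg * INR n)))) by ring.
    assert (Hw : INR n - A <= Cmod (Cplus z (RtoC (sg * INR n)))).
    { eapply Rle_trans; [|apply Cmod_re_le]. destruct z as [x y]. simpl.
      unfold A; simpl. destruct Hsg; subst sg; unfold Rabs; repeat destruct Rcase_abs; lra. }
    eapply Rle_trans; [apply Sterm_bound with (rho := INR n - A); lra|].
    eapply Rle_trans; [apply rp_exp_ge1 with (b := -1); lra|].
    replace (-1) with (- (1)) by ring. rewrite rp_opp, rp_1 by lra. lra.
  - replace (Finite 0) with (Rbar_inv p_infty) by reflexivity.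
    apply is_lim_seq_inv; [|discriminate].
    eapply is_lim_seq_minus; [apply is_lim_seq_INR | apply is_lim_seq_const | reflexivity].
Qed.

Lemma Sterm_congr e w1 w2 : w1 = w2 -> Sterm e w1 = Sterm e w2.
Proof. intros ->; reflexivity. Qed.

Ltac ceq := apply injective_projections; simpl; ring.

Lemma shift_cs e z N :
  cs (P e (Cplus z (RtoC 1))) N =
  Cplus (cs (P e z) N) (Cminus (Sterm e (Cplus z (RtoC (1 * INR N)))) (Sterm e (Cplus z (RtoC (-1 * INR N))))).
Proof.
  induction N.
  - simpl. replace (Cplus z (RtoC (-1 * 0))) with (Cplus z (RtoC (1 * 0))) by ceq. ring.
  - simpl cs. rewrite IHN. unfold P.
    rewrite (Sterm_congr e (Cplus (Cplus z (RtoC 1)) (RtoC (INR N))) (Cplus z (RtoC (1 * INR (Datatypes.S N))))) by (rewrite S_INR; ceq).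
    rewrite (Sterm_congr e (Cminus (Cplus z (RtoC 1)) (RtoC (INR N + 1))) (Cplus z (RtoC (-1 * INR N)))) by ceq.
    rewrite (Sterm_congr e (Cplus z (RtoC (INR N))) (Cplus z (RtoC (1 * INR N)))) by ceq.
    rewrite (Sterm_congr e (Cminus z (RtoC (INR N + 1))) (Cplus z (RtoC (-1 * INR (Datatypes.S N))))) by (rewrite S_INR; ceq).
    ring.
Qed.

Lemma shift_fwd e z l : 0 <= e -> @is_series C_AbsRing C_NormedModule (P e z) l ->
  @is_series C_AbsRing C_NormedModule (P e (Cplus z (RtoC 1))) l.
Proof.
  intros He H. apply cs_series. apply series_cs in H.
  apply climit_ext with (u := fun N => Cplus (cs (P e z) N) (Cminus (Sterm e (Cplus z (RtoC (1 * INR N)))) (Sterm e (Cplus z (RtoC (-1 * INR N)))))).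
  { intros n; symmetry; apply shift_cs. }
  replace l with (Cplus l (Cminus (RtoC 0) (RtoC 0))) by ring.
  apply climit_plus; auto. apply climit_minus; apply Sterm_tail; auto.
Qed.

Lemma shift_bwd e z l : 0 <= e -> @is_series C_AbsRing C_NormedModule (P e (Cplus z (RtoC 1))) l ->
  @is_series C_AbsRing C_NormedModule (P e z) l.
Proof.
  intros He H. apply cs_series. apply series_cs in H.
  apply climit_ext with (u := fun N => Cminus (cs (P e (Cplus z (RtoC 1))) N) (Cminus (Sterm e (Cplus z (RtoC (1 * INR N)))) (Sterm e (Cplus z (RtoC (-1 * INR N)))))).
  { intros n. rewrite shift_cs. ring. }
  replace l with (Cminus l (Cminus (RtoC 0) (RtoC 0))) by ring.
  apply climit_minus; auto. apply climit_minus; apply Sterm_tail; auto.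
Qed.

Lemma series_congr e z1 z2 l : z1 = z2 -> @is_series C_AbsRing C_NormedModule (P e z1) l -> @is_series C_AbsRing C_NormedModule (P e z2) l.
Proof. intros ->; auto. Qed.

Lemma shift_k_fwd e k : 0 <= e -> forall z l, @is_series C_AbsRing C_NormedModule (P e z) l ->
  @is_series C_AbsRing C_NormedModule (P e (Cplus z (RtoC (INR k)))) l.
Proof.
  intros He. induction k; intros z l H.
  - eapply series_congr; [|exact H]. simpl. ceq.
  - apply IHk in H. apply shift_fwd in H; auto. eapply series_congr; [|exact H]. rewrite S_INR. ceq.
Qed.

Lemma shift_k_bwd e k : 0 <= e -> forall z l, @is_series C_AbsRing C_NormedModule (P e z) l ->
  @is_series C_AbsRing C_NormedModule (P e (Cminus z (RtoC (INR k)))) l.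
Proof.
  intros He. induction k; intros z l H.
  - eapply series_congr; [|exact H]. simpl. ceq.
  - apply IHk in H. apply shift_bwd; [exact He|]. eapply series_congr; [|exact H]. rewrite S_INR. ceq.
Qed.

Lemma reduce z : exists z0, Im z0 = Im z /\ 0 <= Re z0 < 1 /\
  forall e l, 0 <= e -> @is_series C_AbsRing C_NormedModule (P e z0) l -> @is_series C_AbsRing C_NormedModule (P e z) l.
Proof.
  destruct z as [x y].
  destruct (archimed x) as [H1 H2].
  set (m := (up x - 1)%Z).
  assert (Hm : IZR m <= x < IZR m + 1).
  { unfold m. rewrite minus_IZR. simpl. lra. }
  exists (x - IZR m, y). split; [reflexivity|]. split; [simpl; lra|].
  intros e l He Hl. destruct (Z_le_gt_dec 0 m) as [Hp|Hn].
  - apply (shift_k_fwd e (Z.to_nat m) He) in Hl. eapply series_congr; [|exact Hl].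
    rewrite INR_IZR_INZ, Z2Nat.id by lia. ceq.
  - apply (shift_k_bwd e (Z.to_nat (- m)) He) in Hl. eapply series_congr; [|exact Hl].
    rewrite INR_IZR_INZ, Z2Nat.id by lia. rewrite opp_IZR. ceq.
Qed.

Lemma conv_general e z : 0 <= e <= 1 -> Im z <> 0 -> exists l, @is_series C_AbsRing C_NormedModule (P e z) l.
Proof.
  intros He Hy. destruct (reduce z) as [z0 [Hi [Hr Himp]]].
  assert (Hy0 : 0 < Rabs (Im z)) by (apply Rabs_pos_lt; auto).
  destruct (conv01 (Rabs (Im z)) Hy0 e z0 He Hr ltac:(rewrite Hi; lra)) as [l [Hl _]].
  exists l. apply Himp; auto; lra.
Qed.

Lemma S_periodic e z : 0 <= e <= 1 -> Im z <> 0 -> S e (Cplus z (RtoC 1)) = S e z.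
Proof.
  intros He Hy. destruct (conv_general e z He Hy) as [l Hl].
  rewrite (S_eq e z l Hl). apply S_eq. apply shift_fwd; auto; lra.
Qed.

Lemma S_bound_general y0 (hy0 : 0 < y0) e z : 0 <= e <= 1 -> y0 <= Rabs (Im z) ->
  Cmod (S e z) <= 32 * (1 + / y0) * Rpower (Rabs (Im z)) (- 1 - 2 * e).
Proof.
  intros He HY. destruct (reduce z) as [z0 [Hi [Hr Himp]]].
  destruct (conv01 y0 hy0 e z0 He Hr ltac:(rewrite Hi; lra)) as [l [Hl Hb]].
  rewrite (S_eq e z l (Himp e l ltac:(lra) Hl)). rewrite <- Hi. exact Hb.
Qed.

Section Gam.
Variable e : R.
Hypothesis He : 0 < e <= 1.

Definition gf (t : R) : R := exp (- t) * Rpower t (e - 1).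
Definition gg (t : R) : R := 2 * Rpower (t / (1 + t)) e / (t * (1 + t)).
Definition gG (t : R) : R := 2 / e * Rpower (t / (1 + t)) e.

Lemma gf_cont t : 0 < t -> continuous gf t.
Proof.
  intros Ht. apply (ex_derive_continuous (K := R_AbsRing) (V := R_NormedModule)). unfold gf, Rpower. auto_derive. lra.
Qed.

Lemma gg_cont t : 0 < t -> continuous gg t.
Proof.
  intros Ht. apply (ex_derive_continuous (K := R_AbsRing) (V := R_NormedModule)). unfold gg, Rpower. auto_derive.
  assert (0 < t / (1 + t)) by (apply Rdiv_lt_0_compat; lra).
  repeat split; try lra. nra.
Qed.

Lemma gG_deriv t : 0 < t -> is_derive gG t (gg t).
Proof.
  intros Ht. unfold gG, gg, Rpower.
  assert (Hq : 0 < t / (1 + t)) by (apply Rdiv_lt_0_compat; lra).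
  auto_derive.
  - repeat split; lra.
  - unfold Rdiv. field. repeat split; lra.
Qed.

Lemma exp_ge_sq t : 0 <= t -> (1 + t) ^ 2 <= 2 * exp t.
Proof.
  intros Ht.
  assert (H := exp_ineq1_le (t / 4)).
  assert (E : exp t = exp (t / 4) ^ 4).
  { replace t with (t / 4 + t / 4 + t / 4 + t / 4) at 1 by field. rewrite !exp_plus. ring. }
  rewrite E. assert (0 <= 1 + t / 4) by lra.
  assert ((1 + t / 4) ^ 4 <= exp (t / 4) ^ 4) by (apply pow_incr; lra).
  assert ((1 + t) ^ 2 <= 2 * (1 + t / 4) ^ 4) by nra. lra.
Qed.

Lemma gf_pos t : 0 < t -> 0 < gf t.
Proof. intros. unfold gf. apply Rmult_lt_0_compat; [apply exp_pos | apply rp_pos]. Qed.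

Lemma gf_le_gg t : 0 < t -> gf t <= gg t.
Proof.
  intros Ht. unfold gf, gg.
  set (A := Rpower t e). set (B := Rpower (1 + t) e). set (Et := exp t).
  assert (HA : 0 < A) by apply rp_pos.
  assert (HB1 : 1 <= B).
  { unfold B, Rpower. apply Rle_trans with (exp 0); [rewrite exp_0; lra|]. apply exp_mono.
    assert (0 <= ln (1 + t)) by (rewrite <- ln_1; apply ln_mono; lra). nra. }
  assert (HB2 : B <= 1 + t).
  { unfold B, Rpower. apply Rle_trans with (exp (ln (1 + t))); [|rewrite exp_ln; lra].
    apply exp_mono. assert (0 <= ln (1 + t)) by (rewrite <- ln_1; apply ln_mono; lra). nra. }
  assert (HE : 0 < Et) by apply exp_pos.
  assert (HEt : (1 + t) ^ 2 <= 2 * Et) by (apply exp_ge_sq; lra).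
  assert (E1 : exp (- t) = / Et) by (apply exp_Ropp).
  assert (E2 : Rpower t (e - 1) = A * / t).
  { unfold A. replace (e - 1) with (e + - (1)) by ring. rewrite rp_plus, rp_opp, rp_1 by lra. reflexivity. }
  assert (E3 : Rpower (t / (1 + t)) e = A * / B).
  { unfold A, B, Rdiv. rewrite rp_mult_base; [| lra | apply Rinv_0_lt_compat; lra].
    rewrite rp_inv_base, rp_opp by lra. reflexivity. }
  rewrite E1, E2, E3.
  assert (D : 2 * (A * / B) / (t * (1 + t)) - / Et * (A * / t) = A / (t * Et * B * (1 + t)) * (2 * Et - B * (1 + t))).
  { field. repeat split; lra. }
  assert (0 <= A / (t * Et * B * (1 + t))).
  { apply Rlt_le, Rdiv_lt_0_compat; auto. repeat apply Rmult_lt_0_compat; lra. }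
  assert (0 <= 2 * Et - B * (1 + t)) by nra.
  assert (0 <= A / (t * Et * B * (1 + t)) * (2 * Et - B * (1 + t))) by (apply Rmult_le_pos; auto).
  lra.
Qed.

Lemma gG_bound t : 0 < t -> 0 <= gG t <= 2 / e.
Proof.
  intros Ht. unfold gG.
  assert (Hq : 0 < t / (1 + t)) by (apply Rdiv_lt_0_compat; lra).
  assert (Hq1 : t / (1 + t) <= 1) by (apply div_le_l; lra).
  assert (Hr : Rpower (t / (1 + t)) e <= 1).
  { unfold Rpower. apply Rle_trans with (exp 0); [|rewrite exp_0; lra]. apply exp_mono.
    assert (ln (t / (1 + t)) <= 0) by (rewrite <- ln_1; apply ln_mono; lra). nra. }
  assert (0 < Rpower (t / (1 + t)) e) by apply rp_pos.
  assert (0 < 2 / e) by (apply Rdiv_lt_0_compat; lra).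
  split; nra.
Qed.

Lemma I_ex a b : 0 < a -> a <= b -> ex_RInt gf a b.
Proof.
  intros Ha Hab. apply (ex_RInt_continuous (V := R_CompleteNormedModule)). intros z Hz.
  rewrite Rmin_left, Rmax_right in Hz by lra. apply gf_cont; lra.
Qed.

Lemma I_bound a b : 0 < a -> a <= b -> RInt gf a b <= 2 / e.
Proof.
  intros Ha Hab.
  assert (Hg : is_RInt gg a b (minus (gG b) (gG a))).
  { apply (is_RInt_derive (V := R_CompleteNormedModule)); intros x Hx; rewrite Rmin_left, Rmax_right in Hx by lra.
    - apply gG_deriv; lra.
    - apply gg_cont; lra. }
  assert (Hle : RInt gf a b <= RInt gg a b).
  { apply RInt_le; auto. apply I_ex; auto. exists (minus (gG b) (gG a)); auto.
    intros x Hx. apply gf_le_gg; lra. }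
  rewrite (is_RInt_unique _ _ _ _ Hg) in Hle.
  assert (H1 := gG_bound a Ha). assert (H2 := gG_bound b ltac:(lra)).
  unfold minus, plus, opp in Hle. simpl in Hle. lra.
Qed.

Lemma I_nonneg a b : 0 < a -> a <= b -> 0 <= RInt gf a b.
Proof.
  intros Ha Hab. apply RInt_ge_0; auto. apply I_ex; auto. intros x Hx. left; apply gf_pos; lra.
Qed.

Lemma I_mono a b a' b' : 0 < a' -> a' <= a -> a <= b -> b <= b' -> RInt gf a b <= RInt gf a' b'.
Proof.
  intros Ha' Ha Hab Hb.
  rewrite <- (RInt_Chasles gf a' a b') by (apply I_ex; lra).
  rewrite <- (RInt_Chasles gf a b b') by (apply I_ex; lra).
  assert (H1 := I_nonneg a' a Ha' Ha). assert (H2 := I_nonneg b b' ltac:(lra) Hb).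
  unfold plus; simpl. lra.
Qed.

Lemma gamma_bounds : 0 < Gamma e <= 2 / e.
Proof.
  set (E := fun v => exists a b, 0 < a <= b /\ v = RInt gf a b).
  assert (Hb : bound E).
  { exists (2 / e). intros v [a [b [Hab ->]]]. apply I_bound; lra. }
  assert (Hn : exists v, E v) by (exists (RInt gf 1 1); exists 1, 1; split; [lra|auto]).
  destruct (completeness E Hb Hn) as [l [Hub Hlub]].
  assert (Hl : is_RInt_gen gf (at_right 0) (Rbar_locally p_infty) l).
  { intros Q [eps HQ].
    assert (Hex : exists a0 b0, 0 < a0 <= b0 /\ l - eps < RInt gf a0 b0).
    { apply NNPP. intros Hne.
      assert (l <= l - eps).
      { apply Hlub. intros v [a [b [Hab ->]]]. apply Rnot_lt_le. intros Hlt.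
        apply Hne. exists a, b. split; auto. }
      destruct eps; simpl in *; lra. }
    destruct Hex as [a0 [b0 [Hab0 Hlt0]]].
    exists (fun a => 0 < a < a0) (fun b => b0 < b).
    - exists (mkposreal a0 ltac:(lra)). intros y Hy Hy0. unfold ball in Hy; simpl in Hy.
      unfold AbsRing_ball, abs, minus, plus, opp in Hy; simpl in Hy. apply Rabs_def2 in Hy. lra.
    - exists b0. auto.
    - intros a b Ha Hb2. simpl. exists (RInt gf a b). split.
      + apply (RInt_correct (V := R_CompleteNormedModule)). apply I_ex; lra.
      + apply HQ. unfold ball; simpl. unfold AbsRing_ball, abs, minus, plus, opp; simpl.
        assert (Hm : RInt gf a0 b0 <= RInt gf a b) by (apply I_mono; lra).
        assert (Hu : RInt gf a b <= l) by (apply Hub; exists a, b; split; [lra|auto]).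
        apply Rabs_def1; lra. }
  assert (HG : Gamma e = l).
  { unfold Gamma. apply (is_RInt_gen_unique (V := R_CompleteNormedModule)). exact Hl. }
  rewrite HG. split.
  - assert (H12 : 0 < RInt gf 1 2).
    { apply RInt_gt_0; [lra| intros; apply gf_pos; lra | intros; apply gf_cont; lra]. }
    assert (RInt gf 1 2 <= l) by (apply Hub; exists 1, 2; split; [lra|auto]). lra.
  - apply Hlub. intros v [a [b [Hab ->]]]. apply I_bound; lra.
Qed.
End Gam.


Lemma exp_diff A B : Rabs (exp A - exp B) <= Rabs (A - B) * (exp A + exp B).
Proof.
  assert (HA := exp_pos A). assert (HB := exp_pos B).
  destruct (Rle_dec B A) as [H|H].
  - assert (H1 := exp_ineq1_le (B - A)).
    assert (E : exp B = exp A * exp (B - A)) by (rewrite <- exp_plus; f_equal; ring).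
    assert (exp B <= exp A) by (apply exp_mono; lra).
    rewrite Rabs_pos_eq by lra. rewrite Rabs_pos_eq by lra. nra.
  - assert (H1 := exp_ineq1_le (A - B)).
    assert (E : exp A = exp B * exp (A - B)) by (rewrite <- exp_plus; f_equal; ring).
    assert (exp A <= exp B) by (apply exp_mono; lra).
    rewrite Rabs_left1 by lra. rewrite Rabs_left1 by lra. nra.
Qed.

Lemma rp_half_sq r : 0 < r -> Rpower r (1/2) * Rpower r (1/2) = r.
Proof. intros. rewrite <- rp_plus. replace (1/2 + 1/2) with 1 by field. apply rp_1; auto. Qed.

Lemma ln_abs_bound r : 0 < r -> Rabs (ln r) <= 2 * (Rpower r (1/2) + Rpower r (-(1/2))).
Proof.
  intros Hr.
  assert (Hu := rp_pos r (1/2)). assert (Hv := rp_pos r (-(1/2))).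
  assert (E1 : ln (Rpower r (1/2)) = 1/2 * ln r) by apply ln_Rpower.
  assert (E2 : ln (Rpower r (-(1/2))) = -(1/2) * ln r) by apply ln_Rpower.
  assert (L1 := ln_le_xm1 _ Hu). assert (L2 := ln_le_xm1 _ Hv).
  unfold Rabs; destruct Rcase_abs; lra.
Qed.

Lemma rp_m2e_bound e r : 0 <= e <= 1/4 -> 0 < r -> Rpower r (-(2 * e)) <= 1 + / r.
Proof.
  intros He Hr. assert (Hi : 0 < / r) by (apply Rinv_0_lt_compat; auto).
  destruct (Rle_dec 1 r) as [H1|H1].
  - assert (Rpower r (-(2 * e)) <= Rpower r 0) by (apply rp_exp_ge1; lra). rewrite rp_0 in H. lra.
  - unfold Rpower. assert (ln r < 0) by (rewrite <- ln_1; apply ln_increasing; lra).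
    assert (exp (- (2 * e) * ln r) <= exp (- ln r)) by (apply exp_mono; nra).
    rewrite exp_Ropp, exp_ln in H0 by auto. lra.
Qed.

Lemma ln_diff_bound r r' : 0 < r -> 0 < r' -> Rabs (ln r - ln r') <= Rabs (r - r') / Rmin r r'.
Proof.
  intros Hr Hr'.
  assert (E1 : ln r - ln r' = ln (r / r')).
  { unfold Rdiv. rewrite ln_mult, ln_Rinv; auto. apply Rinv_0_lt_compat; auto. }
  assert (E2 : ln r' - ln r = ln (r' / r)).
  { unfold Rdiv. rewrite ln_mult, ln_Rinv; auto. apply Rinv_0_lt_compat; auto. }
  assert (H1 := ln_le_xm1 (r / r') ltac:(apply Rdiv_lt_0_compat; auto)).
  assert (H2 := ln_le_xm1 (r' / r) ltac:(apply Rdiv_lt_0_compat; auto)).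
  assert (Hm : 0 < Rmin r r') by (apply Rmin_glb_lt; auto).
  assert (Hm1 := Rmin_l r r'). assert (Hm2 := Rmin_r r r').
  set (q := Rabs (r - r') / Rmin r r').
  assert (Hq : Rmin r r' * q = Rabs (r - r')) by (unfold q; field; lra).
  assert (Hq0 : 0 <= q) by (unfold q; apply Rmult_le_pos; [apply Rabs_pos | left; apply Rinv_0_lt_compat; auto]).
  assert (Ha : r / r' - 1 <= q).
  { replace (r / r' - 1) with ((r - r') / r') by (field; lra). apply div_le_l; auto.
    assert (r - r' <= Rabs (r - r')) by apply Rle_abs. nra. }
  assert (Hb : r' / r - 1 <= q).
  { replace (r' / r - 1) with ((r' - r) / r) by (field; lra). apply div_le_l; auto.
    assert (r' - r <= Rabs (r - r')) by (rewrite Rabs_minus_sym; apply Rle_abs). nra. }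
  fold q. apply Rabs_le. lra.
Qed.

Lemma rp_nat r n : 0 < r -> Rpower r (INR n) = r ^ n.
Proof. intros; apply Rpower_pow; auto. Qed.

Lemma rp_sub3 r a : 0 < r -> Rpower r (a - 3) = Rpower r a / (r * r * r).
Proof.
  intros Hr. replace (a - 3) with (a + - (INR 3)) by (simpl; ring).
  rewrite rp_plus, rp_opp, rp_nat by auto. simpl. unfold Rdiv. f_equal. f_equal. ring.
Qed.

Lemma rp_sub2 r a : 0 < r -> Rpower r (a - 2) = Rpower r a / (r * r).
Proof.
  intros Hr. replace (a - 2) with (a + - (INR 2)) by (simpl; ring).
  rewrite rp_plus, rp_opp, rp_nat by auto. simpl. unfold Rdiv. f_equal. f_equal. ring.
Qed.

Lemma phi_bound y0 e r : 0 < y0 -> 0 < e <= 1/4 -> y0 <= r ->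
  Rabs (Rpower r (-(2 * e)) - 1) <= e * (4 * (2 + / y0)) * (Rpower r (1/2) + Rpower r (-(1/2))).
Proof.
  intros Hy0 He Hr.
  assert (H := exp_diff (-(2 * e) * ln r) 0).
  rewrite exp_0 in H. fold (Rpower r (-(2 * e))) in H.
  replace (-(2 * e) * ln r - 0) with (-(2 * e) * ln r) in H by ring.
  rewrite Rabs_mult, Rabs_Ropp, (Rabs_pos_eq (2 * e)) in H by lra.
  assert (Hl := ln_abs_bound r ltac:(lra)).
  assert (Hb := rp_m2e_bound e r ltac:(lra) ltac:(lra)).
  assert (Hi : / r <= / y0) by (apply Rinv_le_contravar; lra).
  assert (0 <= Rabs (ln r)) by apply Rabs_pos.
  assert (0 < Rpower r (-(2 * e))) by apply rp_pos.
  assert (0 < / r) by (apply Rinv_0_lt_compat; lra).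
  assert (0 < Rpower r (1/2)) by apply rp_pos.
  assert (0 < Rpower r (-(1/2))) by apply rp_pos.
  eapply Rle_trans; [exact H|].
  assert (Rpower r (-(2 * e)) + 1 <= 2 + / y0) by lra.
  assert (2 * e * Rabs (ln r) <= 2 * e * (2 * (Rpower r (1 / 2) + Rpower r (- (1 / 2))))) by nra.
  assert (0 <= 2 * e * Rabs (ln r)) by nra.
  assert (2 * e * Rabs (ln r) * (Rpower r (- (2 * e)) + 1) <= 2 * e * (2 * (Rpower r (1 / 2) + Rpower r (- (1 / 2)))) * (2 + / y0)).
  { apply Rmult_le_compat; lra. }
  nra.
Qed.

Lemma phidiff_bound e c0 r r' : 0 < e <= 1/4 -> 0 < c0 <= 1 -> 0 < r -> c0 * r <= r' -> Rabs (r - r') <= 1 ->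
  Rabs (Rpower r (-(2 * e)) - Rpower r' (-(2 * e))) <= e * (2 * (1 + / c0) / c0) * (Rpower r (-(2 * e)) / r).
Proof.
  intros He Hc Hr Hr' Hd.
  assert (Hcr : 0 < c0 * r) by nra.
  assert (H := exp_diff (-(2 * e) * ln r) (-(2 * e) * ln r')).
  fold (Rpower r (-(2 * e))) (Rpower r' (-(2 * e))) in H.
  replace (-(2 * e) * ln r - -(2 * e) * ln r') with (-(2 * e) * (ln r - ln r')) in H by ring.
  rewrite Rabs_mult, Rabs_Ropp, (Rabs_pos_eq (2 * e)) in H by lra.
  assert (Hl := ln_diff_bound r r' Hr ltac:(lra)).
  assert (Hmin : c0 * r <= Rmin r r') by (apply Rmin_glb; nra).
  assert (Hl2 : Rabs (ln r - ln r') <= / (c0 * r)).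
  { eapply Rle_trans; [exact Hl|]. unfold Rdiv.
    assert (/ Rmin r r' <= / (c0 * r)) by (apply Rinv_le_contravar; lra).
    assert (0 <= / Rmin r r') by (left; apply Rinv_0_lt_compat; lra).
    nra. }
  assert (Hr2 : Rpower r' (-(2 * e)) <= / c0 * Rpower r (-(2 * e))).
  { eapply Rle_trans; [apply rp_base_neg with (a := c0 * r); lra|].
    rewrite rp_mult_base by lra.
    assert (Rpower c0 (-(2 * e)) <= / c0).
    { unfold Rpower. assert (ln c0 <= 0) by (rewrite <- ln_1; apply ln_mono; lra).
      rewrite <- (exp_ln c0) at 2 by lra. rewrite <- exp_Ropp. apply exp_mono. nra. }
    assert (0 < Rpower r (-(2 * e))) by apply rp_pos. nra. }
  assert (0 < Rpower r (-(2 * e))) by apply rp_pos.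
  assert (0 < Rpower r' (-(2 * e))) by apply rp_pos.
  assert (0 <= Rabs (ln r - ln r')) by apply Rabs_pos.
  eapply Rle_trans; [exact H|].
  assert (E : e * (2 * (1 + / c0) / c0) * (Rpower r (- (2 * e)) / r) = 2 * e * / (c0 * r) * ((1 + / c0) * Rpower r (- (2 * e)))).
  { field. lra. }
  rewrite E.
  apply Rmult_le_compat; try nra.
Qed.

Definition phi e (w : C) : R := Rpower (Cmod w) (-(2 * e)) - 1.
Definition Dd e (w : C) : C := Cdiv (RtoC (phi e w)) w.
Definition E2 e (w : C) : C :=
  Cminus (Cdiv (RtoC (phi e w)) (Cmult (Cmult w w) (Cplus w (RtoC 1))))
         (Cdiv (Cminus (RtoC (phi e w)) (RtoC (phi e (Cplus w (RtoC 1))))) (Cplus w (RtoC 1))).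

Lemma h_decomp e w : w <> RtoC 0 -> Cplus w (RtoC 1) <> RtoC 0 ->
  Cminus (Sterm e w) (Sterm 0 w) = Cplus (Cminus (E2 e w) (Dd e (Cplus w (RtoC 1)))) (Dd e w).
Proof.
  intros H0 H1. rewrite !Sterm_alt by auto.
  replace (- (2 * 0)) with 0 by ring. rewrite rp_0.
  unfold E2, Dd, phi. rewrite !RtoC_minus.
  field. auto.
Qed.

Lemma Cmod_plus1_ge (w : C) : Cmod w - 1 <= Cmod (Cplus w (RtoC 1)).
Proof.
  assert (H := Cmod_triangle (Cplus w (RtoC 1)) (Copp (RtoC 1))).
  replace (Cplus (Cplus w (RtoC 1)) (Copp (RtoC 1))) with w in H by ring.
  rewrite Cmod_opp, Cmod_R, Rabs_R1 in H. lra.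
Qed.

Lemma Cmod_plus1_le (w : C) : Cmod (Cplus w (RtoC 1)) <= Cmod w + 1.
Proof.
  assert (H := Cmod_triangle w (RtoC 1)). rewrite Cmod_R, Rabs_R1 in H. lra.
Qed.

Definition c0 (y0 : R) := y0 / (2 * (1 + y0)).
Definition Ka1 (y0 : R) := 4 * (2 + / y0) / c0 y0.
Definition Ka2 (y0 : R) := 2 * (1 + / c0 y0) / (c0 y0 * c0 y0).

Lemma c0_pos y0 : 0 < y0 -> 0 < c0 y0 <= 1.
Proof.
  intros H. unfold c0. split; [apply Rdiv_lt_0_compat; lra|]. apply div_le_l; lra.
Qed.

Lemma E2_bound y0 e w : 0 < y0 -> 0 < e <= 1/4 -> y0 <= Rabs (Im w) ->
  Cmod (E2 e w) <= e * (Ka1 y0 * (Rpower (Cmod w) (1/2 - 3) + Rpower (Cmod w) (-(1/2) - 3))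
                        + Ka2 y0 * Rpower (Cmod w) (-(2 * e) - 2)).
Proof.
  intros Hy0 He Hw.
  set (r := Cmod w). set (r' := Cmod (Cplus w (RtoC 1))).
  assert (Hr : y0 <= r) by (eapply Rle_trans; [exact Hw | apply Cmod_im_le]).
  assert (Hr'0 : y0 <= r').
  { eapply Rle_trans; [|apply Cmod_im_le]. destruct w as [a b]. simpl in *. replace (b + 0) with b by ring. auto. }
  destruct (c0_pos y0 Hy0) as [Hc1 Hc2].
  assert (Hr1 := Cmod_plus1_ge w). assert (Hr2 := Cmod_plus1_le w). fold r r' in Hr1, Hr2.
  assert (Hcr : c0 y0 * r <= r').
  { destruct (Rle_dec 2 r).
    - assert (c0 y0 <= 1/2) by (unfold c0; apply div_le_l; lra). nra.
    - assert (c0 y0 * 2 <= y0).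
      { unfold c0. replace (y0 / (2 * (1 + y0)) * 2) with (y0 / (1 + y0)) by (field; lra).
        apply div_le_l; nra. }
      nra. }
  assert (Hd : Rabs (r - r') <= 1) by (apply Rabs_le; lra).
  assert (Hw0 : w <> RtoC 0) by (intros E; unfold r in Hr; rewrite E, Cmod_0 in Hr; lra).
  assert (Hw1 : Cplus w (RtoC 1) <> RtoC 0) by (intros E; unfold r' in Hr'0; rewrite E, Cmod_0 in Hr'0; lra).
  unfold E2. eapply Rle_trans; [apply Cmod_triangle|]. rewrite Cmod_opp.
  rewrite !Cmod_div; auto; [| apply Cmult_neq_0; auto; apply Cmult_neq_0; auto].
  rewrite !Cmod_mult, <- RtoC_minus, !Cmod_R. fold r r'.
  unfold phi. fold r r'.
  assert (P1 := phi_bound y0 e r Hy0 He Hr).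
  assert (P2 := phidiff_bound e (c0 y0) r r' He (conj Hc1 Hc2) ltac:(lra) Hcr Hd).
  assert (Hq1 : 0 < Rpower r (1/2)) by apply rp_pos.
  assert (Hq2 : 0 < Rpower r (-(1/2))) by apply rp_pos.
  assert (Hq3 : 0 < Rpower r (-(2 * e))) by apply rp_pos.
  rewrite !rp_sub3, rp_sub2 by lra.
  assert (T1 : Rabs (Rpower r (- (2 * e)) - 1) / (r * r * r') <=
     e * Ka1 y0 * (Rpower r (1/2) / (r * r * r) + Rpower r (-(1/2)) / (r * r * r))).
  { apply Rle_trans with (Rabs (Rpower r (- (2 * e)) - 1) / (c0 y0 * (r * r * r))).
    - unfold Rdiv. apply Rmult_le_compat_l; [apply Rabs_pos|]. apply Rinv_le_contravar.
      + assert (0 < r * r * r) by (repeat apply Rmult_lt_0_compat; lra). nra.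
      + assert (0 < r * r) by nra. nra.
    - apply div_le_l; [assert (0 < r * r * r) by (repeat apply Rmult_lt_0_compat; lra); nra|].
      eapply Rle_trans; [exact P1|]. unfold Ka1. right. field. lra. }
  assert (T2 : Rabs (Rpower r (- (2 * e)) - Rpower r' (- (2 * e))) / r' <=
     e * Ka2 y0 * (Rpower r (- (2 * e)) / (r * r))).
  { apply Rle_trans with (Rabs (Rpower r (- (2 * e)) - Rpower r' (- (2 * e))) / (c0 y0 * r)).
    - unfold Rdiv. apply Rmult_le_compat_l; [apply Rabs_pos|]. apply Rinv_le_contravar; nra.
    - apply div_le_l; [nra|]. eapply Rle_trans; [exact P2|]. unfold Ka2. right. field. lra. }
  replace (Rpower r (- (2 * e)) - 1 - (Rpower r' (- (2 * e)) - 1)) with (Rpower r (- (2 * e)) - Rpower r' (- (2 * e))) by ring. lra.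
Qed.

Lemma tail_gen (F : C -> C) K z (sg : R) : 0 <= K -> (sg = 1 \/ sg = -1) ->
  (forall w, 1 <= Cmod w -> Cmod (F w) <= K / Cmod w) ->
  climit (fun N => F (Cplus z (RtoC (sg * INR N)))) (RtoC 0).
Proof.
  intros HK Hsg HF.
  set (A := Rabs (Re z) + 1).
  apply climit_bound_ev with (b := fun n => K * / (INR n - A)).
  - destruct (eventually_INR_gt (A + 1)) as [N0 HN0]. exists N0. intros n Hn.
    specialize (HN0 n Hn).
    replace (Cminus (F (Cplus z (RtoC (sg * INR n)))) (RtoC 0)) with (F (Cplus z (RtoC (sg * INR n)))) by ring.
    assert (Hw : INR n - A <= Cmod (Cplus z (RtoC (sg * INR n)))).
    { eapply Rle_trans; [|apply Cmod_re_le]. destruct z as [x y]. simpl.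
      unfold A; simpl. destruct Hsg; subst sg; unfold Rabs; repeat destruct Rcase_abs; lra. }
    eapply Rle_trans; [apply HF; lra|]. unfold Rdiv. apply Rmult_le_compat_l; auto.
    apply Rinv_le_contravar; lra.
  - replace (Finite 0) with (Rbar_mult K (Rbar_inv p_infty)) by (simpl; f_equal; ring).
    apply is_lim_seq_scal_l.
    apply is_lim_seq_inv; [|discriminate].
    eapply is_lim_seq_minus; [apply is_lim_seq_INR | apply is_lim_seq_const | reflexivity].
Qed.

Lemma Dd_tail e z sg : 0 <= e -> (sg = 1 \/ sg = -1) ->
  climit (fun N => Dd e (Cplus z (RtoC (sg * INR N)))) (RtoC 0).
Proof.
  intros He Hsg. apply tail_gen with (K := 2); auto; [lra|].
  intros w Hw. unfold Dd, phi.
  assert (Hw0 : w <> RtoC 0) by (intros E; rewrite E, Cmod_0 in Hw; lra).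
  rewrite Cmod_div, Cmod_R by auto. unfold Rdiv. apply Rmult_le_compat_r; [left; apply Rinv_0_lt_compat; lra|].
  assert (Rpower (Cmod w) (-(2 * e)) <= Rpower (Cmod w) 0) by (apply rp_exp_ge1; lra).
  rewrite rp_0 in H. assert (0 < Rpower (Cmod w) (-(2 * e))) by apply rp_pos.
  apply Rabs_le. lra.
Qed.

Lemma Dd_congr e w1 w2 : w1 = w2 -> Dd e w1 = Dd e w2.
Proof. intros ->; reflexivity. Qed.

Definition Qt e z n := Cplus (E2 e (Cplus z (RtoC (INR n)))) (E2 e (Cminus z (RtoC (INR n + 1)))).

Lemma cs_minus a b N : cs (fun n => Cminus (a n) (b n)) N = Cminus (cs a N) (cs b N).
Proof. induction N; simpl; [ring | rewrite IHN; ring]. Qed.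

Lemma diff_cs e z N : Im z <> 0 ->
  cs (fun n => Cminus (P e z n) (P 0 z n)) N =
  Cplus (cs (Qt e z) N) (Cminus (Dd e (Cplus z (RtoC (-1 * INR N)))) (Dd e (Cplus z (RtoC (1 * INR N))))).
Proof.
  intros Hy.
  assert (Hne : forall r, Cplus z (RtoC r) <> RtoC 0).
  { intros r E. apply Hy. change (Im z) with (snd z). assert (snd (Cplus z (RtoC r)) = 0) by (rewrite E; reflexivity).
    simpl in H. lra. }
  assert (Hne' : forall r, Cminus z (RtoC r) <> RtoC 0).
  { intros r E. apply Hy. change (Im z) with (snd z). assert (snd (Cminus z (RtoC r)) = 0) by (rewrite E; reflexivity).
    simpl in H. lra. }
  induction N.
  - simpl. rewrite (Dd_congr e (Cplus z (RtoC (-1 * 0))) (Cplus z (RtoC (1 * 0)))) by ceq. ring.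
  - simpl cs. rewrite IHN. unfold P.
    change (Qt e z N) with (Cplus (E2 e (Cplus z (RtoC (INR N)))) (E2 e (Cminus z (RtoC (INR N + 1))))).
    assert (E1 := h_decomp e (Cplus z (RtoC (INR N)))).
    assert (E2' := h_decomp e (Cminus z (RtoC (INR N + 1)))).
    rewrite (Dd_congr e (Cplus (Cplus z (RtoC (INR N))) (RtoC 1)) (Cplus z (RtoC (1 * INR (Datatypes.S N))))) in E1 by (rewrite S_INR; ceq).
    rewrite (Dd_congr e (Cplus (Cminus z (RtoC (INR N + 1))) (RtoC 1)) (Cplus z (RtoC (-1 * INR N)))) in E2' by ceq.
    rewrite (Dd_congr e (Cplus z (RtoC (INR N))) (Cplus z (RtoC (1 * INR N)))) in E1 by ceq.
    rewrite (Dd_congr e (Cminus z (RtoC (INR N + 1))) (Cplus z (RtoC (-1 * INR (Datatypes.S N))))) in E2' by (rewrite S_INR; ceq).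
    specialize (E1 (Hne _)).
    assert (Hz1 : Cplus (Cplus z (RtoC (INR N))) (RtoC 1) <> RtoC 0).
    { replace (Cplus (Cplus z (RtoC (INR N))) (RtoC 1)) with (Cplus z (RtoC (INR N + 1))) by ceq. apply Hne. }
    specialize (E1 Hz1).
    specialize (E2' (Hne' _)).
    assert (Hz2 : Cplus (Cminus z (RtoC (INR N + 1))) (RtoC 1) <> RtoC 0).
    { replace (Cplus (Cminus z (RtoC (INR N + 1))) (RtoC 1)) with (Cminus z (RtoC (INR N))) by ceq. apply Hne'. }
    specialize (E2' Hz2).
    transitivity (Cplus (Cplus (cs (Qt e z) N)
      (Cminus (Dd e (Cplus z (RtoC (-1 * INR N)))) (Dd e (Cplus z (RtoC (1 * INR N))))))
      (Cplus (Cminus (Sterm e (Cplus z (RtoC (INR N)))) (Sterm 0 (Cplus z (RtoC (INR N)))))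
             (Cminus (Sterm e (Cminus z (RtoC (INR N + 1)))) (Sterm 0 (Cminus z (RtoC (INR N + 1))))))).
    + ring.
    + rewrite E1, E2'. ring.
Qed.

Lemma rho_le1 z n : 0 <= Re z < 1 -> sqrt (INR n ^ 2 + Rabs (Im z) ^ 2) <= Cmod (Cplus z (RtoC (INR n))).
Proof.
  intros Hx. destruct z as [x y]. simpl in Hx. assert (Hn := pos_INR n).
  unfold Cplus, RtoC; cbn [fst snd]. rewrite Cmod_pair. apply sqrt_le_1_alt.
  assert (E2 : Rabs y ^ 2 = y ^ 2) by (unfold Rabs; destruct Rcase_abs; ring). simpl Im. rewrite E2. nra.
Qed.

Lemma rho_le2 z n : 0 <= Re z < 1 -> sqrt (INR n ^ 2 + Rabs (Im z) ^ 2) <= Cmod (Cminus z (RtoC (INR n + 1))).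
Proof.
  intros Hx. destruct z as [x y]. simpl in Hx. assert (Hn := pos_INR n).
  unfold Cminus, Cplus, Copp, RtoC; cbn [fst snd]. rewrite Cmod_pair. apply sqrt_le_1_alt.
  assert (E2 : Rabs y ^ 2 = y ^ 2) by (unfold Rabs; destruct Rcase_abs; ring). simpl Im. rewrite E2. nra.
Qed.

Lemma E2_bound_rho y0 e w rho : 0 < y0 -> 0 < e <= 1/4 -> y0 <= Rabs (Im w) -> 0 < rho -> rho <= Cmod w ->
  Cmod (E2 e w) <= e * (Ka1 y0 * (Rpower rho (-(5/2)) + Rpower rho (-(7/2))) + Ka2 y0 * Rpower rho (-(2 + 2 * e))).
Proof.
  intros Hy0 He Hw Hr Hrw.
  eapply Rle_trans; [apply (E2_bound y0 e w); auto|].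
  assert (0 < Ka1 y0).
  { unfold Ka1. destruct (c0_pos y0 Hy0). apply Rdiv_lt_0_compat; auto.
    assert (0 < / y0) by (apply Rinv_0_lt_compat; lra). lra. }
  assert (0 < Ka2 y0).
  { unfold Ka2. destruct (c0_pos y0 Hy0). apply Rdiv_lt_0_compat; [|nra].
    assert (0 < / c0 y0) by (apply Rinv_0_lt_compat; lra). lra. }
  replace (1/2 - 3) with (-(5/2)) by field. replace (-(1/2) - 3) with (-(7/2)) by field.
  replace (-(2 * e) - 2) with (-(2 + 2 * e)) by ring.
  assert (Rpower (Cmod w) (-(5/2)) <= Rpower rho (-(5/2))) by (apply rp_base_neg; lra).
  assert (Rpower (Cmod w) (-(7/2)) <= Rpower rho (-(7/2))) by (apply rp_base_neg; lra).
  assert (Rpower (Cmod w) (-(2 + 2 * e)) <= Rpower rho (-(2 + 2 * e))) by (apply rp_base_neg; lra).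
  apply Rmult_le_compat_l; [lra|]. nra.
Qed.

Lemma rs_lin a b c (f g h : nat -> R) N :
  rs (fun n => a * (b * (f n + g n) + c * h n)) N = a * (b * (rs f N + rs g N) + c * rs h N).
Proof. induction N; simpl; [ring | rewrite IHN; ring]. Qed.

Lemma Ypow y0 e Y : 0 < y0 -> 0 < e <= 1/4 -> y0 <= Y ->
  Rpower Y (1 - 5/2) + Rpower Y (1 - 7/2) <= (1 + / y0) * (1 + / y0) * Rpower Y (-1 - 2 * e).
Proof.
  intros Hy0 He HY.
  assert (Hi : 0 < / y0) by (apply Rinv_0_lt_compat; lra).
  assert (H1 : Rpower Y (1 - 5/2) <= (1 + / y0) * Rpower Y (-1 - 2 * e)).
  { replace (1 - 5/2) with ((-1 - 2 * e) + (2 * e - 1/2)) by field. rewrite rp_plus.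
    assert (0 < Rpower Y (-1 - 2 * e)) by apply rp_pos.
    assert (Rpower Y (2 * e - 1/2) <= 1 + / y0).
    { destruct (Rle_dec 1 Y).
      - assert (Rpower Y (2 * e - 1/2) <= Rpower Y 0) by (apply rp_exp_ge1; lra). rewrite rp_0 in H0. lra.
      - unfold Rpower. assert (ln Y < 0) by (rewrite <- ln_1; apply ln_increasing; lra).
        assert (exp ((2 * e - 1/2) * ln Y) <= exp (- ln Y)) by (apply exp_mono; nra).
        rewrite exp_Ropp, exp_ln in H1 by lra.
        assert (/ Y <= / y0) by (apply Rinv_le_contravar; lra). lra. }
    nra. }
  assert (H2 : Rpower Y (1 - 7/2) <= / y0 * Rpower Y (1 - 5/2)).
  { replace (1 - 7/2) with ((1 - 5/2) + - (1)) by field. rewrite rp_plus, rp_opp, rp_1 by lra.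
    assert (/ Y <= / y0) by (apply Rinv_le_contravar; lra).
    assert (0 < Rpower Y (1 - 5/2)) by apply rp_pos. nra. }
  assert (0 < Rpower Y (-1 - 2 * e)) by apply rp_pos.
  assert (0 < Rpower Y (1 - 5/2)) by apply rp_pos.
  nra.
Qed.

Definition Cd (y0 : R) := 2 * (16 * (1 + / y0)) * (Ka1 y0 * ((1 + / y0) * (1 + / y0)) + Ka2 y0).

Lemma diff_bound01 y0 e z : 0 < y0 -> 0 < e <= 1/4 -> 0 <= Re z < 1 -> y0 <= Rabs (Im z) ->
  Cmod (Cminus (S e z) (S 0 z)) <= e * Cd y0 * Rpower (Rabs (Im z)) (-1 - 2 * e).
Proof.
  intros Hy0 He Hx HY.
  assert (Hy : Im z <> 0) by (intros E; rewrite E, Rabs_R0 in HY; lra).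
  destruct (conv01 y0 Hy0 e z ltac:(lra) Hx HY) as [le [Hle _]].
  destruct (conv01 y0 Hy0 0 z ltac:(lra) Hx HY) as [l0 [Hl0 _]].
  rewrite (S_eq _ _ _ Hle), (S_eq _ _ _ Hl0).
  apply series_cs in Hle. apply series_cs in Hl0.
  assert (Hd : climit (cs (fun n => Cminus (P e z n) (P 0 z n))) (Cminus le l0)).
  { eapply climit_ext; [intros n; symmetry; apply cs_minus|]. apply climit_minus; auto. }
  assert (HQ : climit (cs (Qt e z)) (Cminus (Cminus le l0) (Cminus (RtoC 0) (RtoC 0)))).
  { apply climit_ext with (u := fun n => Cminus (cs (fun n0 => Cminus (P e z n0) (P 0 z n0)) n)
        (Cminus (Dd e (Cplus z (RtoC (-1 * INR n)))) (Dd e (Cplus z (RtoC (1 * INR n)))))).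
    - intros n. rewrite (diff_cs e z n Hy). ring.
    - apply climit_minus; auto. apply climit_minus; apply Dd_tail; lra. }
  replace (Cminus le l0) with (Cminus (Cminus le l0) (Cminus (RtoC 0) (RtoC 0))) by ring.
  set (Y := Rabs (Im z)) in *.
  set (f := fun n => Rpower (sqrt (INR n ^ 2 + Y ^ 2)) (-(5/2))).
  set (g := fun n => Rpower (sqrt (INR n ^ 2 + Y ^ 2)) (-(7/2))).
  set (h := fun n => Rpower (sqrt (INR n ^ 2 + Y ^ 2)) (-(2 + 2 * e))).
  apply (climit_norm_le _ _ _ HQ). intros N.
  eapply Rle_trans; [apply Cmod_cs_le|].
  eapply Rle_trans.
  { apply rs_le with (b := fun n => (2 * e) * (Ka1 y0 * (f n + g n) + Ka2 y0 * h n)).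
    intros n _. unfold Qt. eapply Rle_trans; [apply Cmod_triangle|].
    assert (Hrho : 0 < sqrt (INR n ^ 2 + Y ^ 2)).
    { apply sqrt_lt_R0. assert (Hn := pos_INR n). assert (0 < Y) by lra. nra. }
    assert (B1 := E2_bound_rho y0 e (Cplus z (RtoC (INR n))) _ Hy0 He ltac:(simpl; rewrite Rplus_0_r; exact HY) Hrho (rho_le1 z n Hx)).
    assert (B2 := E2_bound_rho y0 e (Cminus z (RtoC (INR n + 1))) _ Hy0 He ltac:(simpl; rewrite Ropp_0, Rplus_0_r; exact HY) Hrho (rho_le2 z n Hx)).
    unfold f, g, h. lra. }
  rewrite rs_lin.
  assert (Sf := SB y0 Hy0 (5/2) Y ltac:(lra) HY N).
  assert (Sg := SB y0 Hy0 (7/2) Y ltac:(lra) HY N).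
  assert (Sh := SB y0 Hy0 (2 + 2 * e) Y ltac:(lra) HY N).
  fold f in Sf. fold g in Sg. fold h in Sh.
  replace (1 - (2 + 2 * e)) with (-1 - 2 * e) in Sh by ring.
  assert (Yp := Ypow y0 e Y Hy0 He HY).
  assert (HA1 : 0 < Ka1 y0).
  { unfold Ka1. destruct (c0_pos y0 Hy0). apply Rdiv_lt_0_compat; auto.
    assert (0 < / y0) by (apply Rinv_0_lt_compat; lra). lra. }
  assert (HA2 : 0 < Ka2 y0).
  { unfold Ka2. destruct (c0_pos y0 Hy0). apply Rdiv_lt_0_compat; [|nra].
    assert (0 < / c0 y0) by (apply Rinv_0_lt_compat; lra). lra. }
  set (K1 := 16 * (1 + / y0)) in *.
  assert (HK1 : 0 < K1) by (unfold K1; assert (0 < / y0) by (apply Rinv_0_lt_compat; lra); lra).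
  assert (Hsum : rs f N + rs g N <= K1 * ((1 + / y0) * (1 + / y0) * Rpower Y (-1 - 2 * e))).
  { assert (K1 * Rpower Y (1 - 5 / 2) + K1 * Rpower Y (1 - 7 / 2) <= K1 * ((1 + / y0) * (1 + / y0) * Rpower Y (-1 - 2 * e))) by nra.
    lra. }
  unfold Cd. fold K1.
  assert (0 < Rpower Y (-1 - 2 * e)) by apply rp_pos.
  assert (Ka1 y0 * (rs f N + rs g N) <= Ka1 y0 * (K1 * ((1 + / y0) * (1 + / y0) * Rpower Y (-1 - 2 * e)))) by (apply Rmult_le_compat_l; lra).
  assert (Ka2 y0 * rs h N <= Ka2 y0 * (K1 * Rpower Y (-1 - 2 * e))) by (apply Rmult_le_compat_l; lra).
  assert (E : e * (2 * K1 * (Ka1 y0 * ((1 + / y0) * (1 + / y0)) + Ka2 y0)) * Rpower Y (-1 - 2 * e) =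
    2 * e * (Ka1 y0 * (K1 * ((1 + / y0) * (1 + / y0) * Rpower Y (-1 - 2 * e))) + Ka2 y0 * (K1 * Rpower Y (-1 - 2 * e)))) by ring.
  rewrite E. apply Rmult_le_compat_l; lra.
Qed.

Definition cexp (u : C) : C := (exp (fst u) * cos (snd u), exp (fst u) * sin (snd u)).

Lemma Cmod_le_sum (z : C) : Cmod z <= Rabs (fst z) + Rabs (snd z).
Proof.
  destruct z as [a b]. unfold Cmod; simpl.
  apply Rsqr_incr_0_var.
  - rewrite Rsqr_sqrt by nra. unfold Rsqr.
    assert (Rabs a * Rabs a = a * a) by (unfold Rabs; destruct Rcase_abs; ring).
    assert (Rabs b * Rabs b = b * b) by (unfold Rabs; destruct Rcase_abs; ring).
    assert (0 <= Rabs a) by apply Rabs_pos. assert (0 <= Rabs b) by apply Rabs_pos. nra.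
  - assert (0 <= Rabs a) by apply Rabs_pos. assert (0 <= Rabs b) by apply Rabs_pos. lra.
Qed.

Lemma Cmod_fst (z : C) : Rabs (fst z) <= Cmod z.
Proof.
  destruct z as [a b]. unfold Cmod; simpl. rewrite <- sqrt_Rsqr_abs. apply sqrt_le_1_alt. unfold Rsqr. nra.
Qed.

Lemma Cmod_snd (z : C) : Rabs (snd z) <= Cmod z.
Proof.
  destruct z as [a b]. unfold Cmod; simpl. rewrite <- sqrt_Rsqr_abs. apply sqrt_le_1_alt. unfold Rsqr. nra.
Qed.

Lemma mvt_real (f df : R -> R) (k : nat) (be : R) t :
  f 0 = 0 -> (forall s, is_derive f s (df s)) -> 0 <= be ->
  (forall s, 0 <= s <= 1 -> Rabs (df s) <= be * s ^ k) -> 0 <= t <= 1 ->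
  Rabs (f t) <= be * t ^ (k + 1).
Proof.
  intros H0 Hd Hbe Hb Ht.
  destruct (Req_dec t 0) as [E|E].
  - subst. rewrite H0, Rabs_R0. rewrite pow_i by lia. lra.
  - destruct (MVT_cor2 f df 0 t ltac:(lra)) as [c [Hc1 Hc2]].
    { intros c _. apply is_derive_Reals. apply Hd. }
    rewrite H0, Rminus_0_r, Rminus_0_r in Hc1. rewrite Hc1.
    rewrite Rabs_mult, (Rabs_pos_eq t) by lra.
    specialize (Hb c ltac:(lra)).
    assert (c ^ k <= t ^ k) by (apply pow_incr; lra).
    assert (0 <= c ^ k) by (apply pow_le; lra).
    rewrite pow_add, pow_1.
    assert (Rabs (df c) <= be * t ^ k) by nra.
    assert (0 <= Rabs (df c)) by apply Rabs_pos. nra.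
Qed.

Lemma mvt_C (G Hd : R -> C) (k : nat) (be : R) :
  G 0 = RtoC 0 ->
  (forall t, is_derive (fun s => fst (G s)) t (fst (Hd t))) ->
  (forall t, is_derive (fun s => snd (G s)) t (snd (Hd t))) ->
  0 <= be ->
  (forall t, 0 <= t <= 1 -> Cmod (Hd t) <= be * t ^ k) ->
  forall t, 0 <= t <= 1 -> Cmod (G t) <= 2 * be * t ^ (k + 1).
Proof.
  intros H0 Hd1 Hd2 Hbe Hb t Ht.
  eapply Rle_trans; [apply Cmod_le_sum|].
  assert (A1 : Rabs (fst (G t)) <= be * t ^ (k + 1)).
  { apply (mvt_real (fun s => fst (G s)) (fun s => fst (Hd s))); auto.
    - rewrite H0. reflexivity.
    - intros s Hs. eapply Rle_trans; [apply Cmod_fst|]. apply Hb; auto. }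
  assert (A2 : Rabs (snd (G t)) <= be * t ^ (k + 1)).
  { apply (mvt_real (fun s => snd (G s)) (fun s => snd (Hd s))); auto.
    - rewrite H0. reflexivity.
    - intros s Hs. eapply Rle_trans; [apply Cmod_snd|]. apply Hb; auto. }
  lra.
Qed.

Section Tay.
Variables a b : R.
Definition uu : C := (a, b).
Definition R0 (t : R) : C := (exp (t * a) * cos (t * b), exp (t * a) * sin (t * b)).
Definition R1f (t : R) : C := (exp (t * a) * cos (t * b) - 1, exp (t * a) * sin (t * b)).
Definition R2f (t : R) : C := (exp (t * a) * cos (t * b) - 1 - t * a, exp (t * a) * sin (t * b) - t * b).
Definition R3f (t : R) : C := (exp (t * a) * cos (t * b) - 1 - t * a - t ^ 2 * (a ^ 2 - b ^ 2) / 2,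
                               exp (t * a) * sin (t * b) - t * b - t ^ 2 * a * b).

Lemma R0_bound t : 0 <= t <= 1 -> Cmod (R0 t) <= exp (Cmod uu) * t ^ 0.
Proof.
  intros Ht. rewrite pow_O, Rmult_1_r.
  assert (Hsc := sin2_cos2 (t * b)). unfold Rsqr in Hsc.
  assert (E : (exp (t * a) * cos (t * b)) ^ 2 + (exp (t * a) * sin (t * b)) ^ 2 = exp (t * a) ^ 2).
  { rewrite <- (Rmult_1_r (exp (t * a) ^ 2)), <- Hsc. ring. }
  unfold R0, Cmod at 1. cbn [fst snd]. rewrite E, sqrt_pow2 by (left; apply exp_pos).
  apply exp_mono.
  assert (H : Rabs a <= Cmod uu) by apply (Cmod_fst uu).
  assert (a <= Rabs a) by apply Rle_abs. assert (- a <= Rabs a) by (rewrite <- Rabs_Ropp; apply Rle_abs).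
  nra.
Qed.

Lemma R1_bound t : 0 <= t <= 1 -> Cmod (R1f t) <= 2 * (Cmod uu * exp (Cmod uu)) * t ^ (0 + 1).
Proof.
  apply (mvt_C R1f (fun t => Cmult uu (R0 t)) 0).
  - unfold R1f. rewrite !Rmult_0_l, exp_0, cos_0, sin_0. apply injective_projections; simpl; ring.
  - intros s. unfold R1f, R0, uu; simpl. auto_derive; auto. ring.
  - intros s. unfold R1f, R0, uu; simpl. auto_derive; auto. ring.
  - apply Rmult_le_pos; [apply Cmod_ge_0 | left; apply exp_pos].
  - intros s Hs. rewrite Cmod_mult. assert (H := R0_bound s Hs).
    assert (0 <= Cmod uu) by apply Cmod_ge_0. simpl in *. nra.
Qed.

Lemma R2_bound t : 0 <= t <= 1 -> Cmod (R2f t) <= 2 * (Cmod uu * (2 * (Cmod uu * exp (Cmod uu)))) * t ^ (1 + 1).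
Proof.
  apply (mvt_C R2f (fun t => Cmult uu (R1f t)) 1).
  - unfold R2f. rewrite !Rmult_0_l, exp_0, cos_0, sin_0. apply injective_projections; simpl; ring.
  - intros s. unfold R2f, R1f, uu; simpl. auto_derive; auto. ring.
  - intros s. unfold R2f, R1f, uu; simpl. auto_derive; auto. ring.
  - assert (0 <= Cmod uu) by apply Cmod_ge_0. assert (0 < exp (Cmod uu)) by apply exp_pos. nra.
  - intros s Hs. rewrite Cmod_mult. assert (H := R1_bound s Hs).
    assert (0 <= Cmod uu) by apply Cmod_ge_0. simpl in *. nra.
Qed.

Lemma R3_bound t : 0 <= t <= 1 -> Cmod (R3f t) <= 2 * (Cmod uu * (2 * (Cmod uu * (2 * (Cmod uu * exp (Cmod uu)))))) * t ^ (2 + 1).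
Proof.
  apply (mvt_C R3f (fun t => Cmult uu (R2f t)) 2).
  - unfold R3f. rewrite !Rmult_0_l, exp_0, cos_0, sin_0. apply injective_projections; simpl; field.
  - intros s. unfold R3f, R2f, uu; simpl. auto_derive; auto. field.
  - intros s. unfold R3f, R2f, uu; simpl. auto_derive; auto. field.
  - assert (0 <= Cmod uu) by apply Cmod_ge_0. assert (0 < exp (Cmod uu)) by apply exp_pos. repeat apply Rmult_le_pos; lra.
  - intros s Hs. rewrite Cmod_mult. assert (H := R2_bound s Hs).
    assert (0 <= Cmod uu) by apply Cmod_ge_0. simpl in *. nra.
Qed.
End Tay.

Lemma taylor3 (u : C) :
  Cmod (Cminus (Cminus (Cminus (cexp u) (RtoC 1)) u) (Cmult (Cmult u u) (RtoC (/ 2)))) <= 8 * Cmod u ^ 3 * exp (Cmod u).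
Proof.
  destruct u as [a b].
  assert (H := R3_bound a b 1 ltac:(lra)).
  assert (E : Cminus (Cminus (Cminus (cexp (a, b)) (RtoC 1)) (a, b)) (Cmult (Cmult (a, b) (a, b)) (RtoC (/ 2))) = R3f a b 1).
  { unfold cexp, R3f. apply injective_projections; simpl; rewrite !Rmult_1_l; field. }
  rewrite E. eapply Rle_trans; [exact H|]. unfold uu. simpl. lra.
Qed.

Definition uz (z : C) : C := (- (2 * PI) * snd z, 2 * PI * fst z).
Definition qf (z : C) : C := cexp (uz z).
Definition Ef (z : C) : C :=
  Cmult (RtoC (- (4 * PI ^ 2))) (Cdiv (qf z) (Cmult (Cminus (RtoC 1) (qf z)) (Cminus (RtoC 1) (qf z)))).
Definition half (z : C) : C := Cmult (RtoC (/ 2)) z.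

Lemma qf_eq (z : C) : qf z = (exp (- (2 * PI) * snd z) * cos (2 * PI * fst z), exp (- (2 * PI) * snd z) * sin (2 * PI * fst z)).
Proof. reflexivity. Qed.

Lemma Cmod_qf z : Cmod (qf z) = exp (- (2 * PI) * snd z).
Proof.
  rewrite qf_eq. unfold Cmod at 1. cbn [fst snd].
  assert (Hsc := sin2_cos2 (2 * PI * fst z)). unfold Rsqr in Hsc.
  set (E := exp (- (2 * PI) * snd z)).
  assert (H : (E * cos (2 * PI * fst z)) ^ 2 + (E * sin (2 * PI * fst z)) ^ 2 = E ^ 2).
  { rewrite <- (Rmult_1_r (E ^ 2)), <- Hsc. ring. }
  rewrite H, sqrt_pow2; [auto | left; apply exp_pos].
Qed.

Lemma Cmod_1_minus_ge (q : C) : Rabs (1 - Cmod q) <= Cmod (Cminus (RtoC 1) q).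
Proof.
  apply Rabs_le. split.
  - assert (H := Cmod_triangle (Cminus (RtoC 1) q) (RtoC 1)).
    replace (Cplus (Cminus (RtoC 1) q) (RtoC 1)) with (Copp (Cminus q (RtoC 2))) in H by (apply injective_projections; simpl; ring).
    assert (H2 := Cmod_triangle q (Copp (RtoC 1))).
    replace (Cplus q (Copp (RtoC 1))) with (Cminus q (RtoC 1)) in H2 by ring.
    assert (H3 : Cmod q <= Cmod (Cminus (RtoC 1) q) + 1).
    { assert (H4 := Cmod_triangle (Copp (Cminus (RtoC 1) q)) (RtoC 1)).
      replace (Cplus (Copp (Cminus (RtoC 1) q)) (RtoC 1)) with q in H4 by ring.
      rewrite Cmod_opp, Cmod_R, Rabs_R1 in H4. exact H4. }
    lra.
  - assert (H4 := Cmod_triangle (Cminus (RtoC 1) q) q).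
    replace (Cplus (Cminus (RtoC 1) q) q) with (RtoC 1) in H4 by ring.
    rewrite Cmod_R, Rabs_R1 in H4. lra.
Qed.

Lemma exp_ne1 t : t <> 0 -> exp t <> 1.
Proof.
  intros Ht E. destruct (Rdichotomy _ _ Ht) as [H|H].
  - assert (exp t < exp 0) by (apply exp_increasing; auto). rewrite exp_0 in H0. lra.
  - assert (exp 0 < exp t) by (apply exp_increasing; auto). rewrite exp_0 in H0. lra.
Qed.

Lemma one_minus_q_ne0 z : snd z <> 0 -> Cminus (RtoC 1) (qf z) <> RtoC 0.
Proof.
  intros Hy E. assert (H := Cmod_1_minus_ge (qf z)). rewrite E, Cmod_0, Cmod_qf in H.
  assert (exp (- (2 * PI) * snd z) <> 1).
  { apply exp_ne1. assert (PI > 0) by apply PI_RGT_0. intros E2. apply Hy. nra. }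
  assert (Rabs (1 - exp (- (2 * PI) * snd z)) > 0) by (apply Rabs_pos_lt; lra).
  lra.
Qed.

Lemma Ef_bound z : snd z <> 0 ->
  Cmod (Ef z) <= 4 * PI ^ 2 * (exp (- (2 * PI) * Rabs (snd z)) / (1 - exp (- (2 * PI) * Rabs (snd z))) ^ 2).
Proof.
  intros Hy. unfold Ef.
  assert (Hne := one_minus_q_ne0 z Hy).
  rewrite Cmod_mult, Cmod_div, Cmod_mult, Cmod_R, Cmod_qf by (apply Cmult_neq_0; auto).
  assert (HPI : PI > 0) by apply PI_RGT_0.
  rewrite Rabs_Ropp, Rabs_pos_eq by nra.
  assert (H1 := Cmod_1_minus_ge (qf z)). rewrite Cmod_qf in H1.
  assert (Hr : 0 < Rabs (snd z)) by (apply Rabs_pos_lt; auto).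
  set (u := exp (- (2 * PI) * Rabs (snd z))).
  assert (Hu0 : 0 < u) by apply exp_pos.
  assert (Hu1 : u < 1).
  { unfold u. rewrite <- exp_0. apply exp_increasing. nra. }
  set (m := Cmod (Cminus (RtoC 1) (qf z))) in *.
  assert (Hm : 0 < m) by (apply Cmod_gt_0; auto).
  apply Rmult_le_compat_l; [nra|].
  destruct (Rcase_abs (snd z)) as [Hn|Hp].
  - assert (Eq : exp (- (2 * PI) * snd z) = / u).
    { unfold u. rewrite Rabs_left by auto. rewrite <- exp_Ropp. f_equal. ring. }
    rewrite Eq in *. rewrite Rabs_left1 in H1.
    2: { assert (1 <= / u) by (rewrite <- Rinv_1; apply Rinv_le_contravar; lra). lra. }
    assert (Hm2 : (1 - u) / u <= m) by (replace ((1 - u) / u) with (- (1 - / u)) by (field; lra); lra).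
    apply div_le_l; [nra|].
    assert (0 < (1 - u) / u) by (apply Rdiv_lt_0_compat; lra).
    assert (((1 - u) / u) ^ 2 <= m ^ 2) by (apply pow_incr; lra).
    replace (/ u) with (u / (1 - u) ^ 2 * ((1 - u) / u) ^ 2) by (field; lra).
    assert (0 < u / (1 - u) ^ 2) by (apply Rdiv_lt_0_compat; nra).
    replace (m * m) with (m ^ 2) by ring. nra.
  - assert (Eq : exp (- (2 * PI) * snd z) = u).
    { unfold u. rewrite Rabs_pos_eq by lra. reflexivity. }
    rewrite Eq in *. rewrite Rabs_pos_eq in H1 by lra.
    apply div_le_l; [nra|].
    assert ((1 - u) ^ 2 <= m ^ 2) by (apply pow_incr; lra).
    assert (0 < u / (1 - u) ^ 2) by (apply Rdiv_lt_0_compat; nra).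
    replace u with (u / (1 - u) ^ 2 * (1 - u) ^ 2) at 1 by (field; lra).
    replace (m * m) with (m ^ 2) by ring. nra.
Qed.

Lemma half_eq z : half z = (/ 2 * fst z, / 2 * snd z).
Proof. unfold half. apply injective_projections; simpl; ring. Qed.

Lemma qf_half_sq z : Cmult (qf (half z)) (qf (half z)) = qf z.
Proof.
  rewrite half_eq, !qf_eq. cbn [fst snd].
  set (x := fst z). set (y := snd z).
  replace (2 * PI * x) with (2 * (2 * PI * (/ 2 * x))) by field.
  replace (- (2 * PI) * y) with (- (2 * PI) * (/ 2 * y) + - (2 * PI) * (/ 2 * y)) by field.
  rewrite cos_2a, sin_2a, exp_plus.
  apply injective_projections; simpl; ring.
Qed.

Lemma qf_half1 z : qf (half (Cplus z (RtoC 1))) = Copp (qf (half z)).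
Proof.
  rewrite !half_eq, !qf_eq. cbn [fst snd].
  replace (fst (Cplus z (RtoC 1))) with (fst z + 1) by (simpl; ring). replace (snd (Cplus z (RtoC 1))) with (snd z) by (simpl; ring).
  replace (2 * PI * (/ 2 * (fst z + 1))) with (2 * PI * (/ 2 * fst z) + PI) by field.
  rewrite neg_cos, neg_sin. apply injective_projections; simpl; ring.
Qed.

Lemma qf_per z : qf (Cplus z (RtoC 1)) = qf z.
Proof.
  rewrite !qf_eq. cbn [fst snd].
  replace (fst (Cplus z (RtoC 1))) with (fst z + 1) by (simpl; ring). replace (snd (Cplus z (RtoC 1))) with (snd z) by (simpl; ring).
  replace (2 * PI * (fst z + 1)) with (2 * PI * fst z + 2 * INR 1 * PI) by (simpl; ring).
  rewrite cos_period, sin_period. reflexivity.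
Qed.

Lemma Ef_per z : Ef (Cplus z (RtoC 1)) = Ef z.
Proof. unfold Ef. rewrite qf_per. reflexivity. Qed.

Lemma Ef_dup z : snd z <> 0 -> Cplus (Ef (half z)) (Ef (half (Cplus z (RtoC 1)))) = Cmult (RtoC 4) (Ef z).
Proof.
  intros Hy.
  assert (H1 : Cminus (RtoC 1) (qf (half z)) <> RtoC 0).
  { apply one_minus_q_ne0. rewrite half_eq. simpl. lra. }
  assert (H2 : Cminus (RtoC 1) (qf (half (Cplus z (RtoC 1)))) <> RtoC 0).
  { apply one_minus_q_ne0. rewrite half_eq. simpl. lra. }
  assert (H3 := one_minus_q_ne0 z Hy).
  unfold Ef. rewrite qf_half1 in *. rewrite <- (qf_half_sq z) in H3 |- *.
  set (r := qf (half z)) in *.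
  replace (Cminus (RtoC 1) (Copp r)) with (Cplus (RtoC 1) r) in * by ring.
  field. auto.
Qed.

Lemma sin_lb_ge a : 0 <= a <= 2 -> a / 3 <= sin_lb a.
Proof.
  intros H. unfold sin_lb, sin_approx, sin_term. simpl. field_simplify.
  assert (0 <= a^5 * (42 - a^2)) by (apply Rmult_le_pos; [apply pow_le; lra| nra]).
  assert (0 <= a * (4 - a^2)) by nra.
  lra.
Qed.

Lemma PI_bounds : 3 < PI <= 4.
Proof. split; [assert (H := PI2_3_2); lra | apply PI_4]. Qed.

Lemma sin_sq_ge a : Rabs a <= PI / 2 -> a ^ 2 / 9 <= sin a ^ 2.
Proof.
  intros H. assert (HP := PI_bounds).
  destruct (Rle_dec 0 a).
  - rewrite Rabs_pos_eq in H by lra.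
    assert (Hs := SIN a r ltac:(lra)). assert (Hl := sin_lb_ge a ltac:(lra)).
    assert (a / 3 <= sin a) by lra. nra.
  - rewrite Rabs_left in H by lra.
    assert (Hs := SIN (- a) ltac:(lra) ltac:(lra)). assert (Hl := sin_lb_ge (- a) ltac:(lra)).
    rewrite sin_neg in Hs. assert (- a / 3 <= - sin a) by lra. nra.
Qed.

Lemma one_minus_cos_ge t : Rabs t <= PI -> t ^ 2 / 36 <= 1 - cos t.
Proof.
  intros H. replace t with (2 * (t / 2)) at 2 by field. rewrite cos_2a_sin.
  assert (Hs := sin_sq_ge (t / 2) ltac:(rewrite Rabs_div by lra; rewrite (Rabs_pos_eq 2) by lra; lra)).
  nra.
Qed.

Lemma exp_gap t : Rabs t <= 2 * PI -> exp (- (4 * PI)) * t ^ 2 <= (1 - exp (- t)) ^ 2.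
Proof.
  intros H. assert (HP := PI_bounds).
  assert (E4 : exp (- (4 * PI)) = exp (- (2 * PI)) * exp (- (2 * PI))) by (rewrite <- exp_plus; f_equal; ring).
  assert (H2 : 0 < exp (- (2 * PI))) by apply exp_pos.
  assert (H3 : exp (- (2 * PI)) <= 1) by (rewrite <- exp_0; apply exp_mono; lra).
  destruct (Rle_dec 0 t).
  - rewrite Rabs_pos_eq in H by lra.
    assert (Hi := exp_ineq1_le t).
    assert (Hm : exp (- t) * exp t = 1) by (rewrite <- exp_plus; replace (- t + t) with 0 by ring; apply exp_0).
    assert (Hge : exp (- (2 * PI)) <= exp (- t)) by (apply exp_mono; lra).
    assert (He : 0 < exp (- t)) by apply exp_pos.
    assert (A : t * exp (- t) <= 1 - exp (- t)) by nra.
    assert (B : t * exp (- (2 * PI)) <= 1 - exp (- t)) by nra.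
    assert (0 <= t * exp (- (2 * PI))) by nra.
    rewrite E4. nra.
  - rewrite Rabs_left in H by lra.
    assert (Hi := exp_ineq1_le (- t)).
    assert (B : - t * exp (- (2 * PI)) <= exp (- t) - 1) by nra.
    assert (0 <= - t * exp (- (2 * PI))) by nra.
    rewrite E4. nra.
Qed.

Definition kap := 4 * PI ^ 2 * exp (- (4 * PI)) / 36.

Lemma kap_pos : 0 < kap.
Proof. unfold kap. assert (HP := PI_bounds). assert (0 < exp (- (4 * PI))) by apply exp_pos. apply Rdiv_lt_0_compat; [|lra]. apply Rmult_lt_0_compat; [|auto]. nra. Qed.

Lemma q_gap z : Rabs (fst z) <= 1/2 -> Rabs (snd z) <= 1 ->
  kap * (fst z ^ 2 + snd z ^ 2) <= Cmod (Cminus (RtoC 1) (qf z)) ^ 2.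
Proof.
  intros Hx Hy. assert (HP := PI_bounds).
  set (x := fst z) in *. set (y := snd z) in *.
  set (E := exp (- (2 * PI) * y)). set (th := 2 * PI * x).
  assert (Hc : Cmod (Cminus (RtoC 1) (qf z)) ^ 2 = (1 - E) ^ 2 + 2 * E * (1 - cos th)).
  { rewrite qf_eq. fold x y. fold E th. unfold Cmod. cbn [fst snd].
    rewrite pow2_sqrt.
    - assert (Hsc := sin2_cos2 th). unfold Rsqr in Hsc. simpl. nra.
    - simpl. ring_simplify. assert (H0 := pow2_ge_0 (1 - E * cos th)). assert (H1 := pow2_ge_0 (E * sin th)). nra. }
  rewrite Hc.
  assert (HE : exp (- (2 * PI)) <= E) by (apply exp_mono; assert (y <= 1) by (unfold Rabs in Hy; destruct Rcase_abs; lra); nra).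
  assert (HE0 : 0 < exp (- (2 * PI))) by apply exp_pos.
  assert (G1 := exp_gap (2 * PI * y) ltac:(rewrite Rabs_mult, Rabs_pos_eq by lra; nra)).
  replace (- (2 * PI * y)) with (- (2 * PI) * y) in G1 by ring. fold E in G1.
  assert (G2 := one_minus_cos_ge th ltac:(unfold th; rewrite Rabs_mult, Rabs_pos_eq by lra; nra)).
  assert (E4 : exp (- (4 * PI)) = exp (- (2 * PI)) * exp (- (2 * PI))) by (rewrite <- exp_plus; f_equal; ring).
  assert (H3 : exp (- (2 * PI)) <= 1) by (rewrite <- exp_0; apply exp_mono; lra).
  assert (Ha : kap * y ^ 2 <= (1 - E) ^ 2).
  { unfold kap. assert (0 <= y ^ 2) by nra. assert (0 < exp (- (4 * PI))) by apply exp_pos.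
    replace (4 * PI ^ 2 * exp (- (4 * PI)) / 36 * y ^ 2) with (exp (- (4 * PI)) * (2 * PI * y) ^ 2 / 36) by (field).
    assert (0 <= exp (- (4 * PI)) * (2 * PI * y) ^ 2) by (apply Rmult_le_pos; [lra | apply pow2_ge_0]). lra. }
  assert (Hb : kap * x ^ 2 <= 2 * E * (1 - cos th)).
  { assert (0 < E) by apply exp_pos. assert (0 <= th ^ 2 / 36) by (apply Rmult_le_pos; [apply pow2_ge_0 | lra]).
    assert (exp (- (4 * PI)) <= E) by (rewrite E4; nra).
    assert (Ek : kap * x ^ 2 = exp (- (4 * PI)) * (th ^ 2 / 36)) by (unfold kap, th; field).
    rewrite Ek.
    assert (0 < exp (- (4 * PI))) by apply exp_pos.
    assert (exp (- (4 * PI)) * (th ^ 2 / 36) <= E * (th ^ 2 / 36)) by (apply Rmult_le_compat_r; lra).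
    assert (E * (th ^ 2 / 36) <= E * (1 - cos th)) by (apply Rmult_le_compat_l; lra).
    assert (0 <= E * (1 - cos th)) by (apply Rmult_le_pos; lra). replace (2 * E * (1 - cos th)) with (2 * (E * (1 - cos th))) by ring. lra. }
  lra.
Qed.

Lemma Cmod_uz z : Cmod (uz z) = 2 * PI * Cmod z.
Proof.
  assert (E : uz z = Cmult (0, 2 * PI) z) by (unfold uz; apply injective_projections; simpl; ring).
  rewrite E, Cmod_mult. f_equal. unfold Cmod; simpl.
  replace (0 * (0 * 1) + 2 * PI * (2 * PI * 1)) with ((2 * PI) ^ 2) by ring.
  apply sqrt_pow2. assert (H := PI_bounds). lra.
Qed.

Lemma uz_sq z : Cmult (uz z) (uz z) = Cmult (RtoC (- (4 * PI ^ 2))) (Cmult z z).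
Proof. unfold uz. apply injective_projections; simpl; ring. Qed.

Lemma Cmod_sq z : Cmod z ^ 2 = fst z ^ 2 + snd z ^ 2.
Proof. unfold Cmod. rewrite pow2_sqrt; auto. nra. Qed.

Lemma num_id (u R : C) :
  Cminus (Cmult (Cmult u u) (Cplus (Cplus (Cplus (RtoC 1) u) (Cmult (Cmult u u) (RtoC (/ 2)))) R))
         (Cmult (Cminus (RtoC 1) (Cplus (Cplus (Cplus (RtoC 1) u) (Cmult (Cmult u u) (RtoC (/ 2)))) R))
                (Cminus (RtoC 1) (Cplus (Cplus (Cplus (RtoC 1) u) (Cmult (Cmult u u) (RtoC (/ 2)))) R)))
  = Cminus (Cmult (Cmult (Cmult u u) (Cmult u u)) (RtoC (/ 4))) (Cplus (Cmult (Cmult (RtoC 2) u) R) (Cmult R R)).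
Proof. destruct u, R. apply injective_projections; simpl; field. Qed.

Definition MM := 8 * exp 10.
Definition K4 := 1/4 + 2 * MM + 100 * MM ^ 2.
Definition CL := 16 * PI ^ 4 * K4 / kap.

Lemma laurent z : snd z <> 0 -> Rabs (fst z) <= 1/2 -> Rabs (snd z) <= 1 ->
  Cmod (Cminus (Ef z) (Cinv (Cmult z z))) <= CL.
Proof.
  intros Hy Hx Hy1. assert (HP := PI_bounds).
  assert (Hz0 : z <> RtoC 0) by (intros E; apply Hy; rewrite E; reflexivity).
  assert (Hq0 := one_minus_q_ne0 z Hy).
  set (u := uz z). set (q := qf z).
  set (Rm := Cminus (Cminus (Cminus (cexp u) (RtoC 1)) u) (Cmult (Cmult u u) (RtoC (/ 2)))).
  assert (HR := taylor3 u). fold Rm in HR.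
  assert (Hqe : q = Cplus (Cplus (Cplus (RtoC 1) u) (Cmult (Cmult u u) (RtoC (/ 2)))) Rm) by (unfold Rm, q, qf; fold u; ring).
  assert (Hid : Cminus (Ef z) (Cinv (Cmult z z)) =
    Cdiv (Cminus (Cmult (Cmult (Cmult u u) (Cmult u u)) (RtoC (/ 4))) (Cplus (Cmult (Cmult (RtoC 2) u) Rm) (Cmult Rm Rm)))
         (Cmult (Cmult (Cminus (RtoC 1) q) (Cminus (RtoC 1) q)) (Cmult z z))).
  { unfold Ef. fold q.
    transitivity (Cdiv (Cminus (Cmult (Cmult (RtoC (- (4 * PI ^ 2))) (Cmult z z)) q) (Cmult (Cminus (RtoC 1) q) (Cminus (RtoC 1) q)))
        (Cmult (Cmult (Cminus (RtoC 1) q) (Cminus (RtoC 1) q)) (Cmult z z))).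
    - field. auto.
    - rewrite <- uz_sq. fold u. f_equal. rewrite <- num_id. rewrite <- Hqe. ring. }
  rewrite Hid.
  assert (Hden : Cmult (Cmult (Cminus (RtoC 1) q) (Cminus (RtoC 1) q)) (Cmult z z) <> RtoC 0).
  { repeat apply Cmult_neq_0; auto. }
  rewrite Cmod_div by auto. rewrite !Cmod_mult.
  set (a := Cmod z). set (m := Cmod (Cminus (RtoC 1) q)).
  assert (Ha : 0 < a) by (apply Cmod_gt_0; auto).
  assert (Hgap := q_gap z Hx Hy1). fold q m in Hgap. rewrite <- Cmod_sq in Hgap. fold a in Hgap.
  assert (Hk := kap_pos).
  assert (Hu : Cmod u = 2 * PI * a) by apply Cmod_uz.
  assert (Ha1 : a <= 6/5).
  { assert (a ^ 2 <= (6/5) ^ 2).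
    { unfold a. rewrite Cmod_sq. assert (fst z ^ 2 <= 1/4) by (unfold Rabs in Hx; destruct Rcase_abs; nra).
      assert (snd z ^ 2 <= 1) by (unfold Rabs in Hy1; destruct Rcase_abs; nra). nra. }
    nra. }
  assert (Hu10 : Cmod u <= 10) by nra.
  assert (HM : 8 * Cmod u ^ 3 * exp (Cmod u) <= MM * Cmod u ^ 3).
  { unfold MM. assert (exp (Cmod u) <= exp 10) by (apply exp_mono; lra).
    assert (0 <= Cmod u ^ 3) by (apply pow_le; apply Cmod_ge_0). nra. }
  set (U := Cmod u) in *. set (r := Cmod Rm) in *.
  assert (HU0 : 0 <= U) by (unfold U; apply Cmod_ge_0).
  assert (Hr0 : 0 <= r) by (unfold r; apply Cmod_ge_0).
  assert (Hr : r <= MM * U ^ 3) by lra.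
  assert (HMp : 0 < MM) by (unfold MM; assert (0 < exp 10) by apply exp_pos; lra).
  assert (Hnum : Cmod (Cminus (Cmult (Cmult (Cmult u u) (Cmult u u)) (RtoC (/ 4))) (Cplus (Cmult (Cmult (RtoC 2) u) Rm) (Cmult Rm Rm)))
      <= K4 * U ^ 4).
  { eapply Rle_trans; [apply Cmod_triangle|]. rewrite Cmod_opp.
    eapply Rle_trans; [apply Rplus_le_compat_l, Cmod_triangle|].
    rewrite !Cmod_mult, !Cmod_R. fold U r. rewrite Rabs_pos_eq by lra. rewrite Rabs_pos_eq by lra.
    unfold K4.
    assert (r * r <= (MM * U ^ 3) * (MM * U ^ 3)) by (apply Rmult_le_compat; lra).
    assert (2 * U * r <= 2 * U * (MM * U ^ 3)) by (apply Rmult_le_compat_l; lra).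
    assert (U ^ 2 <= 100) by nra.
    assert (0 <= U ^ 4) by (apply pow_le; lra).
    assert ((MM * U ^ 3) * (MM * U ^ 3) = MM ^ 2 * U ^ 2 * U ^ 4) by ring.
    assert (MM ^ 2 * U ^ 2 * U ^ 4 <= MM ^ 2 * 100 * U ^ 4).
    { apply Rmult_le_compat_r; [lra|]. apply Rmult_le_compat_l; [nra | lra]. }
    nra. }
  apply div_le_l; [assert (0 < m) by (apply Cmod_gt_0; auto); repeat apply Rmult_lt_0_compat; lra|].
  eapply Rle_trans; [exact Hnum|].
  rewrite Hu. unfold CL. rewrite (Rmult_comm (m * m * (a * a))).
  assert (HK4 : 0 < K4) by (unfold K4; nra).
  assert (Hden2 : kap * a ^ 2 * (a * a) <= m * m * (a * a)) by (apply Rmult_le_compat_r; nra).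
  replace (K4 * (2 * PI * a) ^ 4) with (16 * PI ^ 4 * K4 / kap * (kap * a ^ 2 * (a * a))) by (field; lra).
  apply Rmult_le_compat_l; [apply Rmult_le_pos; [assert (0 < PI ^ 4) by (apply pow_lt; lra); nra | left; apply Rinv_0_lt_compat; lra] | exact Hden2].
Qed.

Lemma Sterm0 w : w <> RtoC 0 -> Sterm 0 w = Cinv (Cmult w w).
Proof.
  intros Hw. rewrite Sterm_alt by auto. replace (- (2 * 0)) with 0 by ring. rewrite rp_0.
  field. auto.
Qed.

Lemma Sterm0_half w : w <> RtoC 0 -> Sterm 0 (half w) = Cmult (RtoC 4) (Sterm 0 w).
Proof.
  intros Hw.
  assert (Hh : half w <> RtoC 0).
  { intros E. apply Hw. assert (w = Cmult (RtoC 2) (half w)) by (unfold half; apply injective_projections; simpl; field).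
    rewrite H, E. ring. }
  rewrite !Sterm0 by auto. unfold half.
  rewrite RtoC_inv by lra.
  assert (RtoC 2 <> RtoC 0) by (intros E; injection E; lra).
  replace (RtoC 4) with (Cmult (RtoC 2) (RtoC 2)) by (rewrite <- RtoC_mult; f_equal; ring).
  field. auto.
Qed.

Lemma Im_ne0_plus z r : Im z <> 0 -> Cplus z (RtoC r) <> RtoC 0.
Proof. intros Hy E. apply Hy. assert (snd (Cplus z (RtoC r)) = 0) by (rewrite E; reflexivity). simpl in H. change (Im z) with (snd z). lra. Qed.

Lemma Im_ne0_minus z r : Im z <> 0 -> Cminus z (RtoC r) <> RtoC 0.
Proof. intros Hy E. apply Hy. assert (snd (Cminus z (RtoC r)) = 0) by (rewrite E; reflexivity). simpl in H. change (Im z) with (snd z). lra. Qed.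

Lemma P_dup z n : Im z <> 0 ->
  Cplus (P 0 (half z) n) (P 0 (half (Cplus z (RtoC 1))) n) =
  Cmult (RtoC 4) (Cplus (P 0 z (2 * n)) (P 0 z (Datatypes.S (2 * n)))).
Proof.
  intros Hy. unfold P.
  rewrite (Sterm_congr 0 (Cplus (half z) (RtoC (INR n))) (half (Cplus z (RtoC (INR (2 * n)))))) by (rewrite mult_INR; unfold half; apply injective_projections; simpl; field).
  rewrite (Sterm_congr 0 (Cminus (half z) (RtoC (INR n + 1))) (half (Cminus z (RtoC (INR (Datatypes.S (Datatypes.S (2 * n)))))))) by (rewrite !S_INR, mult_INR; unfold half; apply injective_projections; simpl; field).
  rewrite (Sterm_congr 0 (Cplus (half (Cplus z (RtoC 1))) (RtoC (INR n))) (half (Cplus z (RtoC (INR (Datatypes.S (2 * n))))))) by (rewrite !S_INR, mult_INR; unfold half; apply injective_projections; simpl; field).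
  rewrite (Sterm_congr 0 (Cminus (half (Cplus z (RtoC 1))) (RtoC (INR n + 1))) (half (Cminus z (RtoC (INR (2 * n) + 1))))) by (rewrite mult_INR; unfold half; apply injective_projections; simpl; field).
  rewrite (Sterm_congr 0 (Cminus z (RtoC (INR (Datatypes.S (2 * n)) + 1))) (Cminus z (RtoC (INR (Datatypes.S (Datatypes.S (2 * n))))))) by (rewrite !S_INR; ceq).
  rewrite !Sterm0_half by (first [apply Im_ne0_plus | apply Im_ne0_minus]; auto).
  ring.
Qed.

Lemma cs_dup z N : Im z <> 0 ->
  cs (fun n => Cplus (P 0 (half z) n) (P 0 (half (Cplus z (RtoC 1))) n)) N = Cmult (RtoC 4) (cs (P 0 z) (2 * N)).
Proof.
  intros Hy. induction N.
  - simpl. ring.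
  - replace (2 * Datatypes.S N)%nat with (Datatypes.S (Datatypes.S (2 * N))) by lia.
    cbn [cs]. rewrite IHN, P_dup by auto. ring.
Qed.

Lemma cs_plus a b N : cs (fun n => Cplus (a n) (b n)) N = Cplus (cs a N) (cs b N).
Proof. induction N; simpl; [ring | rewrite IHN; ring]. Qed.

Lemma climit_unique u l1 l2 : climit u l1 -> climit u l2 -> l1 = l2.
Proof.
  intros H1 H2. eapply (@filterlim_locally_unique nat C_AbsRing C_NormedModule); [| exact H1 | exact H2].
  apply Proper_StrongProper, eventually_filter.
Qed.

Lemma climit_double u l : climit u l -> climit (fun n => u (2 * n)%nat) l.
Proof.
  intros H. unfold climit in *. eapply filterlim_comp; [|exact H].
  intros Q [N HN]. exists N. intros n Hn. apply HN. lia.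
Qed.

Lemma climit_4 u l : climit u l -> climit (fun n => Cmult (RtoC 4) (u n)) (Cmult (RtoC 4) l).
Proof.
  intros H.
  assert (H2 : climit (fun n => Cplus (Cplus (u n) (u n)) (Cplus (u n) (u n))) (Cplus (Cplus l l) (Cplus l l))).
  { apply climit_plus; apply climit_plus; auto. }
  assert (E4 : RtoC 4 = Cplus (Cplus (RtoC 1) (RtoC 1)) (Cplus (RtoC 1) (RtoC 1))) by (apply injective_projections; simpl; ring).
  rewrite E4. replace (Cmult (Cplus (Cplus (RtoC 1) (RtoC 1)) (Cplus (RtoC 1) (RtoC 1))) l) with (Cplus (Cplus l l) (Cplus l l)) by ring.
  eapply climit_ext; [| exact H2]. intros n. simpl. ring.
Qed.

Lemma S0_dup z : Im z <> 0 ->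
  Cplus (S 0 (half z)) (S 0 (half (Cplus z (RtoC 1)))) = Cmult (RtoC 4) (S 0 z).
Proof.
  intros Hy.
  assert (Hy1 : Im (half z) <> 0) by (rewrite half_eq; simpl; change (snd z) with (Im z); lra).
  assert (Hy2 : Im (half (Cplus z (RtoC 1))) <> 0) by (rewrite half_eq; simpl; change (snd z) with (Im z); lra).
  destruct (conv_general 0 z ltac:(lra) Hy) as [l Hl].
  destruct (conv_general 0 _ ltac:(lra) Hy1) as [l1 Hl1].
  destruct (conv_general 0 _ ltac:(lra) Hy2) as [l2 Hl2].
  rewrite (S_eq _ _ _ Hl), (S_eq _ _ _ Hl1), (S_eq _ _ _ Hl2).
  apply series_cs in Hl. apply series_cs in Hl1. apply series_cs in Hl2.
  apply (climit_unique (cs (fun n => Cplus (P 0 (half z) n) (P 0 (half (Cplus z (RtoC 1))) n)))).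
  - eapply climit_ext; [intros n; symmetry; apply cs_plus|]. apply climit_plus; auto.
  - eapply climit_ext; [intros n; symmetry; apply cs_dup; auto|]. apply climit_4. apply (climit_double (cs (P 0 z))). auto.
Qed.

Lemma basel N : rs (fun n => / (INR n + 1) ^ 2) N <= 2 - 2 / (INR N + 1).
Proof.
  induction N.
  - simpl. lra.
  - cbn [rs]. rewrite S_INR. assert (Hn := pos_INR N).
    assert (/ (INR N + 1) ^ 2 <= 2 / (INR N + 1) - 2 / (INR N + 1 + 1)).
    { replace (2 / (INR N + 1) - 2 / (INR N + 1 + 1)) with (2 / ((INR N + 1) * (INR N + 2))) by (field; lra).
      apply Rle_trans with (/ ((INR N + 1) * (INR N + 2) / 2)).
      - apply Rinv_le_contravar; [apply Rdiv_lt_0_compat; nra|]. apply div_le_l; lra || nra.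
      - right. field. lra. }
    lra.
Qed.

Lemma cs_shift a N : cs a (Datatypes.S N) = Cplus (a 0%nat) (cs (fun n => a (Datatypes.S n)) N).
Proof. induction N; [simpl; ring|]. cbn [cs] in *. rewrite IHN. ring. Qed.

Lemma climit_const l : climit (fun _ => l) l.
Proof. unfold climit. apply filterlim_const. Qed.

Lemma rp_m2 x : 0 < x -> Rpower x (- (2 + 2 * 0)) = / (x ^ 2).
Proof.
  intros Hx. replace (- (2 + 2 * 0)) with (- INR 2) by (simpl; ring). rewrite rp_opp, Rpower_pow by auto. reflexivity.
Qed.

Lemma S0_pole z : Im z <> 0 -> Rabs (Re z) <= 1/2 -> Cmod (Cminus (S 0 z) (Cinv (Cmult z z))) <= 20.
Proof.
  intros Hy Hx.
  destruct (conv_general 0 z ltac:(lra) Hy) as [l Hl].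
  rewrite (S_eq _ _ _ Hl). apply series_cs in Hl. apply climit_S in Hl.
  assert (Hv := climit_minus _ _ _ _ Hl (climit_const (Cinv (Cmult z z)))).
  apply (climit_norm_le _ _ _ Hv). intros N. cbv beta.
  rewrite cs_shift. unfold P at 1.
  assert (Hz : z <> RtoC 0) by (intros E; apply Hy; rewrite E; reflexivity).
  rewrite (Sterm_congr 0 (Cplus z (RtoC (INR 0))) z) by (simpl; ceq).
  rewrite Sterm0 by auto.
  replace (Cminus (Cplus (Cplus (Cinv (Cmult z z)) (Sterm 0 (Cminus z (RtoC (INR 0 + 1))))) (cs (fun n => P 0 z (Datatypes.S n)) N)) (Cinv (Cmult z z)))
    with (Cplus (Sterm 0 (Cminus z (RtoC (INR 0 + 1)))) (cs (fun n => P 0 z (Datatypes.S n)) N)) by ring.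
  eapply Rle_trans; [apply Cmod_triangle|].
  destruct z as [x y]. simpl in Hx, Hy.
  assert (H1 : Cmod (Sterm 0 (Cminus (x, y) (RtoC (INR 0 + 1)))) <= 4).
  { eapply Rle_trans; [apply Sterm_bound with (rho := 1/2); try lra|].
    - eapply Rle_trans; [|apply Cmod_re_le]. simpl. unfold Rabs in *; repeat destruct Rcase_abs; lra.
    - rewrite rp_m2 by lra. right. field. }
  assert (H2 : Cmod (cs (fun n => P 0 (x, y) (Datatypes.S n)) N) <= 16).
  { eapply Rle_trans; [apply Cmod_cs_le|].
    eapply Rle_trans; [apply rs_le with (b := fun n => 8 * / (INR n + 1) ^ 2)|].
    - intros n _. unfold P. eapply Rle_trans; [apply Cmod_triangle|].
      assert (Hn := pos_INR n).
      assert (B : forall w, (INR n + 1) / 2 <= Cmod w -> Cmod (Sterm 0 w) <= 4 * / (INR n + 1) ^ 2).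
      { intros w Hw. eapply Rle_trans; [apply Sterm_bound with (rho := (INR n + 1) / 2); try lra; auto|].
        rewrite rp_m2 by lra. right. field. lra. }
      assert (B1 : Cmod (Sterm 0 (Cplus (x, y) (RtoC (INR (Datatypes.S n))))) <= 4 * / (INR n + 1) ^ 2).
      { apply B. eapply Rle_trans; [|apply Cmod_re_le]. rewrite S_INR. simpl.
        unfold Rabs in *; repeat destruct Rcase_abs; lra. }
      assert (B2 : Cmod (Sterm 0 (Cminus (x, y) (RtoC (INR (Datatypes.S n) + 1)))) <= 4 * / (INR n + 1) ^ 2).
      { apply B. eapply Rle_trans; [|apply Cmod_re_le]. rewrite S_INR. simpl.
        unfold Rabs in *; repeat destruct Rcase_abs; lra. }
      lra.
    - rewrite rs_scal. assert (Hb := basel N). assert (Hn := pos_INR N).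
      assert (0 < 2 / (INR N + 1)) by (apply Rdiv_lt_0_compat; lra). lra. }
  lra.
Qed.

Lemma S0_big z : 1 <= Rabs (Im z) -> Cmod (S 0 z) <= 64.
Proof.
  intros HY. assert (H := S_bound_general 1 ltac:(lra) 0 z ltac:(lra) HY).
  assert (Rpower (Rabs (Im z)) (- 1 - 2 * 0) <= Rpower (Rabs (Im z)) 0) by (apply rp_exp_ge1; lra).
  rewrite rp_0 in H0. replace (/ 1) with 1 in H by field. lra.
Qed.

Definition gq (z : C) : C := Cminus (S 0 z) (Ef z).

Lemma gq_congr z1 z2 : z1 = z2 -> gq z1 = gq z2.
Proof. intros ->; reflexivity. Qed.

Lemma gq_per z : Im z <> 0 -> gq (Cplus z (RtoC 1)) = gq z.
Proof. intros Hy. unfold gq. rewrite S_periodic, Ef_per by (auto; lra). reflexivity. Qed.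

Lemma gq_per_k k : forall z, Im z <> 0 -> gq (Cplus z (RtoC (INR k))) = gq z /\ gq (Cminus z (RtoC (INR k))) = gq z.
Proof.
  induction k; intros z Hy.
  - split; apply gq_congr; simpl; ceq.
  - destruct (IHk z Hy) as [H1 H2]. split.
    + rewrite <- H1. rewrite (gq_congr (Cplus z (RtoC (INR (Datatypes.S k)))) (Cplus (Cplus z (RtoC (INR k))) (RtoC 1))) by (rewrite S_INR; ceq).
      apply gq_per. simpl. change (snd z) with (Im z). lra.
    + rewrite <- H2. rewrite <- (gq_per (Cminus z (RtoC (INR (Datatypes.S k))))).
      * apply gq_congr. rewrite S_INR. ceq.
      * simpl. change (snd z) with (Im z). lra.
Qed.

Lemma gq_reduce z : Im z <> 0 -> exists z', Im z' = Im z /\ Rabs (Re z') <= 1/2 /\ gq z' = gq z.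
Proof.
  intros Hy. destruct z as [x y].
  destruct (archimed (x + 1/2)) as [H1 H2].
  set (m := (up (x + 1/2) - 1)%Z).
  assert (Hm : IZR m <= x + 1/2 < IZR m + 1) by (unfold m; rewrite minus_IZR; simpl; lra).
  exists (x - IZR m, y). split; [reflexivity|]. split.
  - simpl. apply Rabs_le. lra.
  - destruct (Z_le_gt_dec 0 m) as [Hp|Hn].
    + destruct (gq_per_k (Z.to_nat m) (x, y) Hy) as [_ H]. rewrite <- H. apply gq_congr.
      rewrite INR_IZR_INZ, Z2Nat.id by lia. ceq.
    + destruct (gq_per_k (Z.to_nat (- m)) (x, y) Hy) as [H _]. rewrite <- H. apply gq_congr.
      rewrite INR_IZR_INZ, Z2Nat.id by lia. rewrite opp_IZR. ceq.
Qed.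

Definition Bg := 212 + CL.

Lemma CL_pos : 0 < CL.
Proof.
  unfold CL, K4, MM. assert (HP := PI_bounds). assert (Hk := kap_pos).
  assert (0 < exp 10) by apply exp_pos. assert (0 < PI ^ 4) by (apply pow_lt; lra).
  apply Rdiv_lt_0_compat; auto. apply Rmult_lt_0_compat; [lra|]. nra.
Qed.

Lemma gq_bound z : Im z <> 0 -> Cmod (gq z) <= Bg.
Proof.
  intros Hy. destruct (gq_reduce z Hy) as [z' [Hi [Hr He]]]. rewrite <- He.
  assert (Hy' : Im z' <> 0) by (rewrite Hi; auto).
  assert (HP := PI_bounds). assert (HCL := CL_pos).
  unfold gq. destruct (Rle_dec 1 (Rabs (Im z'))).
  - eapply Rle_trans; [apply Cmod_triangle|]. rewrite Cmod_opp.
    assert (H1 := S0_big z' r).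
    assert (H2 := Ef_bound z' Hy').
    set (u := exp (- (2 * PI) * Rabs (snd z'))) in H2.
    assert (Hu0 : 0 < u) by apply exp_pos.
    assert (Hu : u <= 1/2).
    { unfold u. assert (H := exp_ineq1_le (2 * PI * Rabs (snd z'))).
      assert (E : exp (- (2 * PI) * Rabs (snd z')) * exp (2 * PI * Rabs (snd z')) = 1)
        by (rewrite <- exp_plus; replace (- (2 * PI) * Rabs (snd z') + 2 * PI * Rabs (snd z')) with 0 by ring; apply exp_0).
      change (Im z') with (snd z') in r.
      assert (Ht : 2 <= exp (2 * PI * Rabs (snd z'))) by nra.
      assert (0 < exp (- (2 * PI) * Rabs (snd z'))) by apply exp_pos.
      nra. }
    assert (u / (1 - u) ^ 2 <= 2).
    { apply div_le_l; nra. }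
    assert (4 * PI ^ 2 * (u / (1 - u) ^ 2) <= 128) by nra.
    unfold Bg. lra.
  - replace (Cminus (S 0 z') (Ef z')) with (Cminus (Cminus (S 0 z') (Cinv (Cmult z' z'))) (Cminus (Ef z') (Cinv (Cmult z' z')))) by ring.
    eapply Rle_trans; [apply Cmod_triangle|]. rewrite Cmod_opp.
    assert (H1 := S0_pole z' Hy' Hr).
    assert (H2 := laurent z' Hy' Hr ltac:(change (snd z') with (Im z'); lra)).
    unfold Bg. lra.
Qed.

Lemma gq_dup z : Im z <> 0 -> Cplus (gq (half z)) (gq (half (Cplus z (RtoC 1)))) = Cmult (RtoC 4) (gq z).
Proof.
  intros Hy. unfold gq.
  assert (H1 := S0_dup z Hy). assert (H2 := Ef_dup z Hy).
  transitivity (Cminus (Cplus (S 0 (half z)) (S 0 (half (Cplus z (RtoC 1))))) (Cplus (Ef (half z)) (Ef (half (Cplus z (RtoC 1)))))).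
  - ring.
  - rewrite H1, H2. ring.
Qed.

Lemma pow2_ge k : INR k + 1 <= 2 ^ k.
Proof. induction k; [simpl; lra|]. rewrite S_INR. cbn [pow]. assert (1 <= 2 ^ k) by (apply pow_R1_Rle; lra). lra. Qed.

Lemma gq_zero z : Im z <> 0 -> gq z = RtoC 0.
Proof.
  intros Hy.
  assert (Hk : forall k, forall w, Im w <> 0 -> Cmod (gq w) <= Bg / 2 ^ k).
  { induction k; intros w Hw.
    - simpl. replace (Bg / 1) with Bg by field. apply gq_bound; auto.
    - assert (Hd := gq_dup w Hw).
      assert (Hw1 : Im (half w) <> 0) by (rewrite half_eq; simpl; change (snd w) with (Im w); lra).
      assert (Hw2 : Im (half (Cplus w (RtoC 1))) <= 0 \/ Im (half (Cplus w (RtoC 1))) > 0) by lra.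
      assert (Hw2' : Im (half (Cplus w (RtoC 1))) <> 0) by (rewrite half_eq; simpl; change (snd w) with (Im w); lra).
      assert (A1 := IHk _ Hw1). assert (A2 := IHk _ Hw2').
      assert (E : Cmod (Cmult (RtoC 4) (gq w)) = 4 * Cmod (gq w)) by (rewrite Cmod_mult, Cmod_R, Rabs_pos_eq; lra).
      rewrite <- Hd in E. assert (T := Cmod_triangle (gq (half w)) (gq (half (Cplus w (RtoC 1))))).
      assert (P2 : 0 < 2 ^ k) by (apply pow_lt; lra).
      replace (Bg / 2 ^ Datatypes.S k) with (Bg / 2 ^ k / 2) by (simpl; field; lra). lra. }
  destruct (Req_dec (Cmod (gq z)) 0) as [E|E]; [apply Cmod_eq_0; auto|].
  exfalso. assert (Hc : 0 < Cmod (gq z)) by (assert (H := Cmod_ge_0 (gq z)); lra).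
  destruct (eventually_INR_gt (Bg / Cmod (gq z))) as [N HN]. specialize (HN N (le_n N)).
  assert (H := Hk N z Hy). assert (H2 := pow2_ge N).
  assert (P2 : 0 < 2 ^ N) by (apply pow_lt; lra).
  assert (Bg / Cmod (gq z) < 2 ^ N) by lra.
  assert (Bg < 2 ^ N * Cmod (gq z)).
  { apply (Rmult_lt_compat_r (Cmod (gq z))) in H0; auto. replace (Bg / Cmod (gq z) * Cmod (gq z)) with Bg in H0 by (field; lra). lra. }
  assert (Cmod (gq z) * 2 ^ N <= Bg) by (apply Rmult_le_reg_r with (/ 2 ^ N); [apply Rinv_0_lt_compat; lra|]; replace (Cmod (gq z) * 2 ^ N * / 2 ^ N) with (Cmod (gq z)) by (field; lra); exact H).
  lra.
Qed.

Lemma S0_exp y0 z : 0 < y0 -> y0 <= Rabs (Im z) ->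
  Cmod (S 0 z) <= 4 * PI ^ 2 / (1 - exp (- (2 * PI) * y0)) ^ 2 * exp (- (2 * PI) * Rabs (Im z)).
Proof.
  intros Hy0 HY.
  assert (Hy : Im z <> 0) by (intros E; rewrite E, Rabs_R0 in HY; lra).
  assert (Hg := gq_zero z Hy). unfold gq in Hg.
  assert (E : S 0 z = Ef z) by (apply (f_equal (fun w => Cplus w (Ef z))) in Hg; ring_simplify in Hg; rewrite <- Hg; ring).
  rewrite E. eapply Rle_trans; [apply Ef_bound; auto|]. change (snd z) with (Im z).
  assert (HP := PI_bounds).
  set (u := exp (- (2 * PI) * Rabs (Im z))). set (u0 := exp (- (2 * PI) * y0)).
  assert (Hu : u <= u0) by (apply exp_mono; nra).
  assert (Hu0 : u0 < 1) by (unfold u0; rewrite <- exp_0; apply exp_increasing; nra).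
  assert (0 < u) by apply exp_pos.
  assert ((1 - u0) ^ 2 <= (1 - u) ^ 2) by (apply pow_incr; lra).
  assert (0 < (1 - u0) ^ 2) by (apply pow_lt; lra).
  assert (u / (1 - u) ^ 2 <= u / (1 - u0) ^ 2).
  { unfold Rdiv. apply Rmult_le_compat_l; [lra|]. apply Rinv_le_contravar; lra. }
  assert (0 < PI ^ 2) by (apply pow_lt; lra).
  replace (4 * PI ^ 2 / (1 - u0) ^ 2 * u) with (4 * PI ^ 2 * (u / (1 - u0) ^ 2)) by (field; lra).
  apply Rmult_le_compat_l; lra.
Qed.

Lemma S_reduce_eq z : Im z <> 0 -> exists z0, Im z0 = Im z /\ 0 <= Re z0 < 1 /\
  forall e, 0 <= e <= 1 -> S e z = S e z0.
Proof.
  intros Hy. destruct (reduce z) as [z0 [Hi [Hr Himp]]].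
  exists z0. split; auto. split; auto. intros e He.
  assert (Hy0 : 0 < Rabs (Im z)) by (apply Rabs_pos_lt; auto).
  destruct (conv01 (Rabs (Im z)) Hy0 e z0 He Hr ltac:(rewrite Hi; lra)) as [l [Hl _]].
  rewrite (S_eq _ _ _ Hl). apply S_eq. apply Himp; auto; lra.
Qed.

Theorem lemma1p6 (y0 : R) (hy0 : 0 < y0) :
  exists Cst : R, 0 < Cst /\
    forall (z : C) (eps : R),
      y0 <= Rabs (Im z) -> 0 < eps <= 1 ->
      Cmod (S eps z) <=
        Cst * (1 / (Gamma eps * Rpower (Rabs (Im z)) (1 + 2 * eps))
               + exp (- 2 * PI * Rabs (Im z))).
Proof.
  assert (HP := PI_bounds).
  set (K := 32 * (1 + / y0)).
  set (C0 := 4 * PI ^ 2 / (1 - exp (- (2 * PI) * y0)) ^ 2).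
  assert (Hiy : 0 < / y0) by (apply Rinv_0_lt_compat; lra).
  assert (HK : 0 < K) by (unfold K; lra).
  assert (Hu0 : exp (- (2 * PI) * y0) < 1) by (rewrite <- exp_0; apply exp_increasing; nra).
  assert (HC0 : 0 < C0).
  { unfold C0. apply Rdiv_lt_0_compat; [nra|]. apply pow_lt; lra. }
  assert (HCd : 0 <= Cd y0).
  { unfold Cd. destruct (c0_pos y0 hy0).
    assert (0 < Ka1 y0) by (unfold Ka1; apply Rdiv_lt_0_compat; lra).
    assert (0 < Ka2 y0).
    { unfold Ka2. apply Rdiv_lt_0_compat; [|nra]. assert (0 < / c0 y0) by (apply Rinv_0_lt_compat; lra). lra. }
    assert (0 < (1 + / y0) * (1 + / y0)) by nra.
    assert (0 < Ka1 y0 * ((1 + / y0) * (1 + / y0)) + Ka2 y0) by nra.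
    nra. }
  exists (8 * K + 2 * Cd y0 + C0). split; [lra|].
  intros z e HY He.
  assert (Hy : Im z <> 0) by (intros E; rewrite E, Rabs_R0 in HY; lra).
  set (Y := Rabs (Im z)) in *.
  assert (HYp : 0 < Y) by lra.
  destruct (gamma_bounds e He) as [HG1 HG2].
  set (P1 := Rpower Y (-1 - 2 * e)).
  assert (HP1 : 0 < P1) by apply rp_pos.
  assert (ET1 : 1 / (Gamma e * Rpower Y (1 + 2 * e)) = P1 / Gamma e).
  { unfold P1. replace (-1 - 2 * e) with (- (1 + 2 * e)) by ring. rewrite rp_opp.
    assert (0 < Rpower Y (1 + 2 * e)) by apply rp_pos. field. lra. }
  rewrite ET1.
  assert (HT1 : e / 2 * P1 <= P1 / Gamma e).
  { apply le_div_r; auto. assert (Gamma e * (e / 2) <= 1).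
    { replace 1 with (2 / e * (e / 2)) by (field; lra). apply Rmult_le_compat_r; lra. }
    nra. }
  set (T2 := exp (- 2 * PI * Y)).
  assert (HT2 : 0 < T2) by apply exp_pos.
  assert (HT1p : 0 <= P1 / Gamma e) by (apply Rlt_le, Rdiv_lt_0_compat; lra).
  destruct (Rle_dec (1/4) e) as [Hbig|Hsmall].
  - assert (H := S_bound_general y0 hy0 e z ltac:(lra) HY). fold K Y P1 in H.
    assert (P1 <= 8 * (P1 / Gamma e)) by nra.
    assert (K * P1 <= 8 * K * (P1 / Gamma e)) by (replace (8 * K * (P1 / Gamma e)) with (K * (8 * (P1 / Gamma e))) by ring; apply Rmult_le_compat_l; lra).
    assert (0 <= (2 * Cd y0 + C0) * (P1 / Gamma e + T2)) by (apply Rmult_le_pos; lra).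
    nra.
  - destruct (S_reduce_eq z Hy) as [z0 [Hi [Hr Heq]]].
    rewrite (Heq e ltac:(lra)).
    assert (HY0 : y0 <= Rabs (Im z0)) by (rewrite Hi; auto).
    assert (D := diff_bound01 y0 e z0 hy0 ltac:(lra) Hr HY0). rewrite Hi in D. fold Y P1 in D.
    assert (E0 := S0_exp y0 z0 hy0 HY0). rewrite Hi in E0. fold Y C0 in E0.
    replace (exp (- (2 * PI) * Y)) with T2 in E0 by (unfold T2; f_equal; ring).
    replace (S e z0) with (Cplus (Cminus (S e z0) (S 0 z0)) (S 0 z0)) by ring.
    eapply Rle_trans; [apply Cmod_triangle|].
    assert (e * Cd y0 * P1 <= 2 * Cd y0 * (P1 / Gamma e)) by nra.
    assert (0 <= 8 * K * (P1 / Gamma e + T2)) by (apply Rmult_le_pos; lra).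
    assert (0 <= 2 * Cd y0 * T2) by nra.
    assert (0 <= C0 * (P1 / Gamma e)) by nra.
    nra.
Qed.
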